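(* Let $\beta\in\mathbb{R}^3$ with $\|\beta\|\le 1$ and $\rho=\frac12(I_2+\sum_{i=1}^3\beta_i\sigma_i)$. Then: (i) A matrix $P=\frac14\big(I_4+\sum_i\beta_i\sigma_i\otimes I_2+\sum_i\gamma_i I_2\otimes\sigma_i+\sum_{l,k}\delta_{lk}\sigma_l\otimes\sigma_k\big)$ (with this given $\beta$, and $\gamma\in\mathbb{R}^3$, $\delta\in M_3(\mathbb{R})$) is a purification of $\rho$ if and only if $\gamma=\delta^T\beta$ and $\delta$ solves the system $$\delta\delta^T=(1-\|\beta\|^2)I_3+\beta\beta^T,\qquad \det\delta=\|\beta\|^2-1,$$ and every purification of $\rho$ is of this form. (ii) This system always has a solution, and if $\tilde\delta$ is any one solution, then the set of all solutions is exactly $\{\tilde\delta S: S\in SO(3,\mathbb{R})\}$. (iii) Consequently, when $\|\beta\|<1$ the set of purifications of $\rho$ is in bijection with $SO(3,\mathbb{R})$ (via $S\mapsto$ the purification with $\delta=\tilde\delta S$), and when $\|\beta\|=1$ it is in bijection with the unit sphere $S^2\subset\mathbb{R}^3$.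
   Context: $\sigma_1,\sigma_2,\sigma_3$ are the Pauli matrices. A pure state on $\mathbb{C}^2\otimes\mathbb{C}^2$ is a positive semidefinite trace-one matrix that is a projection. A purification of a $2\times2$ density matrix $\rho$ is a pure state $P$ on $\mathbb{C}^2\otimes\mathbb{C}^2$ whose partial trace over the second tensor factor equals $\rho$. For $P=\frac14\big(I_4+\sum_i\beta_i\sigma_i\otimes I_2+\sum_i\gamma_i I_2\otimes\sigma_i+\sum_{l,k}\delta_{lk}\sigma_l\otimes\sigma_k\big)$ the partial trace over the second factor is $\frac12(I_2+\sum_i\beta_i\sigma_i)$ and over the first factor is $\frac12(I_2+\sum_i\gamma_i\sigma_i)$. *)

(* Defs.v *)
From HB Require Import structures.
From mathcomp Require Import all_boot all_order all_algebra.
From mathcomp Require Import complex mxtens.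
Set Implicit Arguments. Unset Strict Implicit. Unset Printing Implicit Defensive.
Import Order.TTheory GRing.Theory Num.Theory.
Local Open Scope ring_scope.

Section Defs.
Variable R : rcfType.
Local Notation C := R[i].

(* Pauli matrices sigma_1, sigma_2, sigma_3 (indexed by 'I_3 = {0,1,2}) *)
Definition sigma1 : 'M[C]_2 := \matrix_(i, j) (if (i : nat) == j then 0 else 1).
Definition sigma2 : 'M[C]_2 :=
  \matrix_(i, j) (if (i : nat) == j then 0
                  else if (i : nat) == 0%N then - Complex 0 1 else Complex 0 1).
Definition sigma3 : 'M[C]_2 :=
  \matrix_(i, j) (if (i : nat) == j then (if (i : nat) == 0%N then 1 else -1) else 0).
Definition pauli (k : 'I_3) : 'M[C]_2 :=
  if (k : nat) == 0%N then sigma1 else if (k : nat) == 1%N then sigma2 else sigma3.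

Definition adjmx m n (A : 'M[C]_(m, n)) : 'M[C]_(n, m) := (map_mx (@conjc R) A)^T.

Definition psd n (A : 'M[C]_n) : Prop :=
  A = adjmx A /\ forall v : 'cV[C]_n, 0 <= (adjmx v *m A *m v) 0 0.

Definition pure_state (P : 'M[C]_(2 * 2)) : Prop :=
  psd P /\ \tr P = 1 /\ P *m P = P.

(* partial trace over the second tensor factor (Kronecker index (i,k) ~ 2i+k) *)
Definition ptrace2 (P : 'M[C]_(2 * 2)) : 'M[C]_2 :=
  \matrix_(i, j) \sum_(k < 2) P (mxtens_index (i, k)) (mxtens_index (j, k)).

Definition purification (rho : 'M[C]_2) (P : 'M[C]_(2 * 2)) : Prop :=
  pure_state P /\ ptrace2 P = rho.

Definition vnorm (b : 'cV[R]_3) : R := Num.sqrt (\sum_(i < 3) b i 0 ^+ 2).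

Definition rho_of (b : 'cV[R]_3) : 'M[C]_2 :=
  2^-1 *: (1%:M + \sum_(i < 3) (b i 0)%:C%C *: pauli i).

Definition Pform (b g : 'cV[R]_3) (d : 'M[R]_3) : 'M[C]_(2 * 2) :=
  4^-1 *: (1%:M
    + \sum_(i < 3) (b i 0)%:C%C *: (pauli i *t (1%:M : 'M[C]_2))
    + \sum_(i < 3) (g i 0)%:C%C *: ((1%:M : 'M[C]_2) *t pauli i)
    + \sum_(l < 3) \sum_(k < 3) (d l k)%:C%C *: (pauli l *t pauli k)).

Definition delta_system (b : 'cV[R]_3) (d : 'M[R]_3) : Prop :=
  d *m d^T = (1 - vnorm b ^+ 2) *: 1%:M + b *m b^T /\ \det d = vnorm b ^+ 2 - 1.

Definition is_SO3 (S : 'M[R]_3) : Prop := S^T *m S = 1%:M /\ \det S = 1.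

End Defs.

Definition set_bij (T U : Type) (A : T -> Prop) (B : U -> Prop) (f : T -> U) : Prop :=
  (forall x, A x -> B (f x)) /\
  (forall x y, A x -> A y -> f x = f y -> x = y) /\
  (forall y, B y -> exists x, A x /\ f x = y).

(* Main.v *)
Require Import Defs.
From HB Require Import structures.
From mathcomp Require Import all_boot all_order all_algebra.
From mathcomp Require Import complex mxtens.
From mathcomp Require Import ring lra.
Import Order.TTheory GRing.Theory Num.Theory.
Local Open Scope ring_scope.


Section Aux.
Variable R : rcfType.

Definition j0 : 'I_3 := @Ordinal 3 0 isT.
Definition j1 : 'I_3 := @Ordinal 3 1 isT.
Definition j2 : 'I_3 := @Ordinal 3 2 isT.
Definition i0 : 'I_2 := @Ordinal 2 0 isT.
Definition i1 : 'I_2 := @Ordinal 2 1 isT.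

Lemma sum3 (V : nmodType) (F : 'I_3 -> V) : \sum_(i < 3) F i = F j0 + F j1 + F j2.
Proof.
rewrite !big_ord_recr big_ord0 /= add0r. by congr (F _ + F _ + F _); apply: val_inj.
Qed.
Lemma sum2 (V : nmodType) (F : 'I_2 -> V) : \sum_(i < 2) F i = F i0 + F i1.
Proof. rewrite !big_ord_recr big_ord0 /= add0r. by congr (F _ + F _); apply: val_inj. Qed.
Lemma sum1 (V : nmodType) (F : 'I_1 -> V) : \sum_(i < 1) F i = F 0.
Proof. by rewrite big_ord1. Qed.

Lemma ord3P (i : 'I_3) : [\/ i = j0, i = j1 | i = j2].
Proof. case: i => [[|[|[|n]]] Hn]; first by constructor 1; apply: val_inj.
by constructor 2; apply: val_inj. by constructor 3; apply: val_inj. by []. Qed.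
Lemma ord2P (i : 'I_2) : i = i0 \/ i = i1.
Proof. case: i => [[|[|n]] Hn]; first by left; apply: val_inj.
by right; apply: val_inj. by []. Qed.
Lemma ord1P (i : 'I_1) : i = 0.
Proof. by apply: val_inj; case: i => [[]]. Qed.

Lemma ej01 : (j0 == j1) = false. Proof. by []. Qed.
Lemma ej02 : (j0 == j2) = false. Proof. by []. Qed.
Lemma ej10 : (j1 == j0) = false. Proof. by []. Qed.
Lemma ej12 : (j1 == j2) = false. Proof. by []. Qed.
Lemma ej20 : (j2 == j0) = false. Proof. by []. Qed.
Lemma ej21 : (j2 == j1) = false. Proof. by []. Qed.
Definition ejs := (ej01, ej02, ej10, ej12, ej20, ej21, eqxx).

Definition f3 (A : 'M[R]_3) (x y : nat) := A (inord x) (inord y).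
Lemma Af3 (A : 'M[R]_3) x y : A x y = f3 A x y.
Proof. by rewrite /f3 !inord_val. Qed.
Lemma inord0_3 : (inord 0 : 'I_3) = j0. Proof. by apply: val_inj; rewrite /= inordK. Qed.
Lemma inord1_3 : (inord 1 : 'I_3) = j1. Proof. by apply: val_inj; rewrite /= inordK. Qed.
Lemma inord2_3 : (inord 2 : 'I_3) = j2. Proof. by apply: val_inj; rewrite /= inordK. Qed.

Lemma det3 (A : 'M[R]_3) : \det A =
  A j0 j0 * (A j1 j1 * A j2 j2 - A j1 j2 * A j2 j1)
 - A j0 j1 * (A j1 j0 * A j2 j2 - A j1 j2 * A j2 j0)
 + A j0 j2 * (A j1 j0 * A j2 j1 - A j1 j1 * A j2 j0).
Proof.
rewrite (expand_det_row _ j0) sum3 /cofactor.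
rewrite !(expand_det_row _ ord0) !big_ord_recr !big_ord0 /= /cofactor.
rewrite !det_mx11 !mxE !Af3 /= /f3 !inord0_3 !inord1_3 !inord2_3.
rewrite !expr0 !expr1 /=. ring.
Qed.

Definition succ3 (i : 'I_3) : 'I_3 := if i == j0 then j1 else if i == j1 then j2 else j0.
Lemma s0 : succ3 j0 = j1. Proof. by []. Qed.
Lemma s1 : succ3 j1 = j2. Proof. by []. Qed.
Lemma s2 : succ3 j2 = j0. Proof. by []. Qed.
Definition cof3 (A : 'M[R]_3) (i j : 'I_3) :=
  A (succ3 i) (succ3 j) * A (succ3 (succ3 i)) (succ3 (succ3 j))
  - A (succ3 i) (succ3 (succ3 j)) * A (succ3 (succ3 i)) (succ3 j).

Lemma adj3 (A : 'M[R]_3) i j : \adj A i j = cof3 A j i.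
Proof.
rewrite mxE /cofactor (expand_det_row _ ord0) !big_ord_recr !big_ord0 /= /cofactor.
rewrite !det_mx11 !mxE.
case: (ord3P i) => ->; case: (ord3P j) => ->;
rewrite /cof3 ?s0 ?s1 ?s2 !Af3 /= /f3 ?inord0_3 ?inord1_3 ?inord2_3 /=; ring.
Qed.

End Aux.


Notation mt a k := (@mxtens_index 2 2 (a, k)).

Lemma sum4 (V : nmodType) (F : 'I_(2*2) -> V) :
  \sum_(k < 2 * 2) F k = F (mt i0 i0) + F (mt i0 i1) + F (mt i1 i0) + F (mt i1 i1).
Proof.
transitivity (\sum_(i < 2) \sum_(j < 2) F (mt i j)); last by rewrite !sum2 addrA.
rewrite pair_big /=; apply: reindex=> //=.
exists (@mxtens_unindex 2 2) => i _. by case: i => x y; rewrite mxtens_indexK.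
by rewrite -surjective_pairing mxtens_unindexK.
Qed.

Section Cplx.
Variable R : rcfType.
Notation Re := (@complex.Re R).
Notation Im := (@complex.Im R).

Lemma e01 : (i0 == i1) = false. Proof. by []. Qed.
Lemma e10 : (i1 == i0) = false. Proof. by []. Qed.

Lemma pauliE j a a' : pauli R j a a' =
  if (j : nat) == 0%N then (if (a : nat) == a' then 0 else 1)
  else if (j : nat) == 1%N then (if (a : nat) == a' then 0 else if (a : nat) == 0%N then - Complex 0 1 else Complex 0 1)
  else (if (a : nat) == a' then (if (a : nat) == 0%N then 1 else -1) else 0).
Proof. by rewrite /pauli; case: ifP => _; [|case: ifP => _]; rewrite mxE. Qed.

Lemma PformE (b g : 'cV[R]_3) (d : 'M[R]_3) a k a' k' :
  Pform b g d (mt a k) (mt a' k') = 4^-1 * (((a == a') && (k == k'))%:R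
   + \sum_(i < 3) (b i 0)%:C%C * (pauli R i a a' * (k == k')%:R)
   + \sum_(i < 3) (g i 0)%:C%C * ((a == a')%:R * pauli R i k k')
   + \sum_(l < 3) \sum_(m < 3) (d l m)%:C%C * (pauli R l a a' * pauli R m k k')).
Proof.
rewrite /Pform !mxE !summxE (inj_eq (can_inj (@mxtens_indexK 2 2))) xpair_eqE.
congr (_ * (_ + _ + _ + _)).
- by apply: eq_bigr => i _; rewrite !mxE !mxtens_indexK.
- by apply: eq_bigr => i _; rewrite !mxE !mxtens_indexK.
- apply: eq_bigr => i _; rewrite summxE; apply: eq_bigr => j _.
  by rewrite !mxE !mxtens_indexK.
Qed.

Lemma c4 : (4^-1 : R[i]) = (4^-1 : R)%:C%C.
Proof. by rewrite -(rmorph_nat (real_complex R)) -fmorphV. Qed.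
Lemma c2 : (2^-1 : R[i]) = (2^-1 : R)%:C%C.
Proof. by rewrite -(rmorph_nat (real_complex R)) -fmorphV. Qed.

Lemma E_0000 (b g : 'cV[R]_3) (d : 'M[R]_3) :
  Pform b g d (mt i0 i0) (mt i0 i0) = Complex (4^-1 * (1 + b j2 0 + g j2 0 + d j2 j2)) (4^-1 * (0)).
Proof. rewrite PformE c4 !sum3 !pauliE /= ?e01 ?e10 ?eqxx /=. congr Complex; ring. Qed.
Lemma E_0001 (b g : 'cV[R]_3) (d : 'M[R]_3) :
  Pform b g d (mt i0 i0) (mt i0 i1) = Complex (4^-1 * (g j0 0 + d j2 j0)) (4^-1 * (- g j1 0 - d j2 j1)).
Proof. rewrite PformE c4 !sum3 !pauliE /= ?e01 ?e10 ?eqxx /=. congr Complex; ring. Qed.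
Lemma E_0010 (b g : 'cV[R]_3) (d : 'M[R]_3) :
  Pform b g d (mt i0 i0) (mt i1 i0) = Complex (4^-1 * (b j0 0 + d j0 j2)) (4^-1 * (- b j1 0 - d j1 j2)).
Proof. rewrite PformE c4 !sum3 !pauliE /= ?e01 ?e10 ?eqxx /=. congr Complex; ring. Qed.
Lemma E_0011 (b g : 'cV[R]_3) (d : 'M[R]_3) :
  Pform b g d (mt i0 i0) (mt i1 i1) = Complex (4^-1 * (d j0 j0 - d j1 j1)) (4^-1 * (- d j0 j1 - d j1 j0)).
Proof. rewrite PformE c4 !sum3 !pauliE /= ?e01 ?e10 ?eqxx /=. congr Complex; ring. Qed.
Lemma E_0100 (b g : 'cV[R]_3) (d : 'M[R]_3) :
  Pform b g d (mt i0 i1) (mt i0 i0) = Complex (4^-1 * (g j0 0 + d j2 j0)) (4^-1 * (g j1 0 + d j2 j1)).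
Proof. rewrite PformE c4 !sum3 !pauliE /= ?e01 ?e10 ?eqxx /=. congr Complex; ring. Qed.
Lemma E_0101 (b g : 'cV[R]_3) (d : 'M[R]_3) :
  Pform b g d (mt i0 i1) (mt i0 i1) = Complex (4^-1 * (1 + b j2 0 - g j2 0 - d j2 j2)) (4^-1 * (0)).
Proof. rewrite PformE c4 !sum3 !pauliE /= ?e01 ?e10 ?eqxx /=. congr Complex; ring. Qed.
Lemma E_0110 (b g : 'cV[R]_3) (d : 'M[R]_3) :
  Pform b g d (mt i0 i1) (mt i1 i0) = Complex (4^-1 * (d j0 j0 + d j1 j1)) (4^-1 * (d j0 j1 - d j1 j0)).
Proof. rewrite PformE c4 !sum3 !pauliE /= ?e01 ?e10 ?eqxx /=. congr Complex; ring. Qed.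
Lemma E_0111 (b g : 'cV[R]_3) (d : 'M[R]_3) :
  Pform b g d (mt i0 i1) (mt i1 i1) = Complex (4^-1 * (b j0 0 - d j0 j2)) (4^-1 * (- b j1 0 + d j1 j2)).
Proof. rewrite PformE c4 !sum3 !pauliE /= ?e01 ?e10 ?eqxx /=. congr Complex; ring. Qed.
Lemma E_1000 (b g : 'cV[R]_3) (d : 'M[R]_3) :
  Pform b g d (mt i1 i0) (mt i0 i0) = Complex (4^-1 * (b j0 0 + d j0 j2)) (4^-1 * (b j1 0 + d j1 j2)).
Proof. rewrite PformE c4 !sum3 !pauliE /= ?e01 ?e10 ?eqxx /=. congr Complex; ring. Qed.
Lemma E_1001 (b g : 'cV[R]_3) (d : 'M[R]_3) :
  Pform b g d (mt i1 i0) (mt i0 i1) = Complex (4^-1 * (d j0 j0 + d j1 j1)) (4^-1 * (- d j0 j1 + d j1 j0)).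
Proof. rewrite PformE c4 !sum3 !pauliE /= ?e01 ?e10 ?eqxx /=. congr Complex; ring. Qed.
Lemma E_1010 (b g : 'cV[R]_3) (d : 'M[R]_3) :
  Pform b g d (mt i1 i0) (mt i1 i0) = Complex (4^-1 * (1 - b j2 0 + g j2 0 - d j2 j2)) (4^-1 * (0)).
Proof. rewrite PformE c4 !sum3 !pauliE /= ?e01 ?e10 ?eqxx /=. congr Complex; ring. Qed.
Lemma E_1011 (b g : 'cV[R]_3) (d : 'M[R]_3) :
  Pform b g d (mt i1 i0) (mt i1 i1) = Complex (4^-1 * (g j0 0 - d j2 j0)) (4^-1 * (- g j1 0 + d j2 j1)).
Proof. rewrite PformE c4 !sum3 !pauliE /= ?e01 ?e10 ?eqxx /=. congr Complex; ring. Qed.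
Lemma E_1100 (b g : 'cV[R]_3) (d : 'M[R]_3) :
  Pform b g d (mt i1 i1) (mt i0 i0) = Complex (4^-1 * (d j0 j0 - d j1 j1)) (4^-1 * (d j0 j1 + d j1 j0)).
Proof. rewrite PformE c4 !sum3 !pauliE /= ?e01 ?e10 ?eqxx /=. congr Complex; ring. Qed.
Lemma E_1101 (b g : 'cV[R]_3) (d : 'M[R]_3) :
  Pform b g d (mt i1 i1) (mt i0 i1) = Complex (4^-1 * (b j0 0 - d j0 j2)) (4^-1 * (b j1 0 - d j1 j2)).
Proof. rewrite PformE c4 !sum3 !pauliE /= ?e01 ?e10 ?eqxx /=. congr Complex; ring. Qed.
Lemma E_1110 (b g : 'cV[R]_3) (d : 'M[R]_3) :
  Pform b g d (mt i1 i1) (mt i1 i0) = Complex (4^-1 * (g j0 0 - d j2 j0)) (4^-1 * (g j1 0 - d j2 j1)).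
Proof. rewrite PformE c4 !sum3 !pauliE /= ?e01 ?e10 ?eqxx /=. congr Complex; ring. Qed.
Lemma E_1111 (b g : 'cV[R]_3) (d : 'M[R]_3) :
  Pform b g d (mt i1 i1) (mt i1 i1) = Complex (4^-1 * (1 - b j2 0 - g j2 0 + d j2 j2)) (4^-1 * (0)).
Proof. rewrite PformE c4 !sum3 !pauliE /= ?e01 ?e10 ?eqxx /=. congr Complex; ring. Qed.



Definition Eall := (E_0000, E_0001, E_0010, E_0011, E_0100, E_0101, E_0110, E_0111, E_1000, E_1001, E_1010, E_1011, E_1100, E_1101, E_1110, E_1111).
Lemma cmul (a b c e : R) : Complex a b * Complex c e = Complex (a*c - b*e) (a*e + b*c). Proof. by []. Qed.
Lemma cadd (a b c e : R) : Complex a b + Complex c e = Complex (a+c) (b+e). Proof. by []. Qed.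
Lemma cconj (a b : R) : conjc (Complex a b) = Complex a (- b). Proof. by []. Qed.
Lemma PPeq' {P : 'M[R[i]]_(2*2)} (H : P *m P = P) a k a' k' :
  P (mt a k) (mt i0 i0) * P (mt i0 i0) (mt a' k') + P (mt a k) (mt i0 i1) * P (mt i0 i1) (mt a' k')
  + P (mt a k) (mt i1 i0) * P (mt i1 i0) (mt a' k') + P (mt a k) (mt i1 i1) * P (mt i1 i1) (mt a' k')
  = P (mt a k) (mt a' k').
Proof. by rewrite -{9}H mxE sum4. Qed.
Ltac gen H a k a' k' := let h1 := fresh "h" in let h2 := fresh "h" in
  have := PPeq' H a k a' k'; rewrite !Eall !cmul !cadd => -[h1 h2].

Definition Cond (b g : 'cV[R]_3) (d : 'M[R]_3) : Prop :=
  (b j0 0 ^+ 2 + b j1 0 ^+ 2 + b j2 0 ^+ 2 + g j0 0 ^+ 2 + g j1 0 ^+ 2 + g j2 0 ^+ 2 + d j0 j0 ^+ 2 + d j0 j1 ^+ 2 + d j0 j2 ^+ 2 + d j1 j0 ^+ 2 + d j1 j1 ^+ 2 + d j1 j2 ^+ 2 + d j2 j0 ^+ 2 + d j2 j1 ^+ 2 + d j2 j2 ^+ 2 = 3) /\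
  (d j0 j0 * g j0 0 + d j0 j1 * g j1 0 + d j0 j2 * g j2 0 = b j0 0) /\
  (d j1 j0 * g j0 0 + d j1 j1 * g j1 0 + d j1 j2 * g j2 0 = b j1 0) /\
  (d j2 j0 * g j0 0 + d j2 j1 * g j1 0 + d j2 j2 * g j2 0 = b j2 0) /\
  (d j0 j0 * b j0 0 + d j1 j0 * b j1 0 + d j2 j0 * b j2 0 = g j0 0) /\
  (d j0 j1 * b j0 0 + d j1 j1 * b j1 0 + d j2 j1 * b j2 0 = g j1 0) /\
  (d j0 j2 * b j0 0 + d j1 j2 * b j1 0 + d j2 j2 * b j2 0 = g j2 0) /\
  (b j0 0 * g j0 0 - (d j1 j1 * d j2 j2 - d j1 j2 * d j2 j1) = d j0 j0) /\
  (b j0 0 * g j1 0 - (d j1 j2 * d j2 j0 - d j1 j0 * d j2 j2) = d j0 j1) /\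
  (b j0 0 * g j2 0 - (d j1 j0 * d j2 j1 - d j1 j1 * d j2 j0) = d j0 j2) /\
  (b j1 0 * g j0 0 - (d j2 j1 * d j0 j2 - d j2 j2 * d j0 j1) = d j1 j0) /\
  (b j1 0 * g j1 0 - (d j2 j2 * d j0 j0 - d j2 j0 * d j0 j2) = d j1 j1) /\
  (b j1 0 * g j2 0 - (d j2 j0 * d j0 j1 - d j2 j1 * d j0 j0) = d j1 j2) /\
  (b j2 0 * g j0 0 - (d j0 j1 * d j1 j2 - d j0 j2 * d j1 j1) = d j2 j0) /\
  (b j2 0 * g j1 0 - (d j0 j2 * d j1 j0 - d j0 j0 * d j1 j2) = d j2 j1) /\
  (b j2 0 * g j2 0 - (d j0 j0 * d j1 j1 - d j0 j1 * d j1 j0) = d j2 j2).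
Lemma PP_Cond (b g : 'cV[R]_3) (d : 'M[R]_3) :
  Pform b g d *m Pform b g d = Pform b g d -> Cond b g d.
Proof.
move=> H.
have [hC1 [hC22 [hC32 hC422]]] : (b j0 0 ^+ 2 + b j1 0 ^+ 2 + b j2 0 ^+ 2 + g j0 0 ^+ 2 + g j1 0 ^+ 2 + g j2 0 ^+ 2 + d j0 j0 ^+ 2 + d j0 j1 ^+ 2 + d j0 j2 ^+ 2 + d j1 j0 ^+ 2 + d j1 j1 ^+ 2 + d j1 j2 ^+ 2 + d j2 j0 ^+ 2 + d j2 j1 ^+ 2 + d j2 j2 ^+ 2 = 3) /\ (d j2 j0 * g j0 0 + d j2 j1 * g j1 0 + d j2 j2 * g j2 0 = b j2 0) /\ (d j0 j2 * b j0 0 + d j1 j2 * b j1 0 + d j2 j2 * b j2 0 = g j2 0) /\ (b j2 0 * g j2 0 - (d j0 j0 * d j1 j1 - d j0 j1 * d j1 j0) = d j2 j2).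
{ gen H i0 i0 i0 i0. gen H i0 i1 i0 i1. gen H i1 i0 i1 i0. gen H i1 i1 i1 i1. clear H.
  split; [lra|split; [lra|split; lra]]. }
have [hC20 [hC21 [hC402 hC412]]] : (d j0 j0 * g j0 0 + d j0 j1 * g j1 0 + d j0 j2 * g j2 0 = b j0 0) /\ (d j1 j0 * g j0 0 + d j1 j1 * g j1 0 + d j1 j2 * g j2 0 = b j1 0) /\ (b j0 0 * g j2 0 - (d j1 j0 * d j2 j1 - d j1 j1 * d j2 j0) = d j0 j2) /\ (b j1 0 * g j2 0 - (d j2 j0 * d j0 j1 - d j2 j1 * d j0 j0) = d j1 j2).
{ gen H i0 i0 i1 i0. gen H i0 i1 i1 i1. gen H i1 i0 i0 i0. gen H i1 i1 i0 i1. clear H.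
  split; [lra|split; [lra|split; lra]]. }
have [hC30 [hC31 [hC420 hC421]]] : (d j0 j0 * b j0 0 + d j1 j0 * b j1 0 + d j2 j0 * b j2 0 = g j0 0) /\ (d j0 j1 * b j0 0 + d j1 j1 * b j1 0 + d j2 j1 * b j2 0 = g j1 0) /\ (b j2 0 * g j0 0 - (d j0 j1 * d j1 j2 - d j0 j2 * d j1 j1) = d j2 j0) /\ (b j2 0 * g j1 0 - (d j0 j2 * d j1 j0 - d j0 j0 * d j1 j2) = d j2 j1).
{ gen H i0 i0 i0 i1. gen H i0 i1 i0 i0. gen H i1 i0 i1 i1. gen H i1 i1 i1 i0. clear H.
  split; [lra|split; [lra|split; lra]]. }
have [hC400 [hC401 [hC410 hC411]]] : (b j0 0 * g j0 0 - (d j1 j1 * d j2 j2 - d j1 j2 * d j2 j1) = d j0 j0) /\ (b j0 0 * g j1 0 - (d j1 j2 * d j2 j0 - d j1 j0 * d j2 j2) = d j0 j1) /\ (b j1 0 * g j0 0 - (d j2 j1 * d j0 j2 - d j2 j2 * d j0 j1) = d j1 j0) /\ (b j1 0 * g j1 0 - (d j2 j2 * d j0 j0 - d j2 j0 * d j0 j2) = d j1 j1).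
{ gen H i0 i0 i1 i1. gen H i0 i1 i1 i0. gen H i1 i0 i0 i1. gen H i1 i1 i0 i0. clear H.
  split; [lra|split; [lra|split; lra]]. }
by rewrite /Cond; do !split.
Qed.
Lemma Cond_PP (b g : 'cV[R]_3) (d : 'M[R]_3) :
  Cond b g d -> Pform b g d *m Pform b g d = Pform b g d.
Proof.
move=> [hC1 [hC20 [hC21 [hC22 [hC30 [hC31 [hC32 [hC400 [hC401 [hC402 [hC410 [hC411 [hC412 [hC420 [hC421 hC422]]]]]]]]]]]]]]].
apply/matrixP => r c; case: (mxtens_indexP r) => a k; case: (mxtens_indexP c) => a' k'.
case: (ord2P a) => ->; case: (ord2P k) => ->; case: (ord2P a') => ->; case: (ord2P k') => ->;
rewrite mxE sum4 !Eall !cmul !cadd; congr Complex; lra.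
Qed.


End Cplx.


Section Part3.
Variable R : rcfType.
Notation Re := (@complex.Re R).
Notation Im := (@complex.Im R).

Lemma ceqP (x y : R[i]) : Re x = Re y -> Im x = Im y -> x = y.
Proof. by case: x; case: y => /= a b c e -> ->. Qed.
Lemma ceqC (z : R[i]) x y : Re z = x -> Im z = y -> z = Complex x y.
Proof. by case: z => a b /= -> ->. Qed.
Lemma cinj (a b c e : R) : Complex a b = Complex c e -> a = c /\ b = e.
Proof. by case=> -> ->. Qed.
Lemma ReD (x y : R[i]) : Re (x + y) = Re x + Re y. Proof. by case: x; case: y. Qed.
Lemma ImD (x y : R[i]) : Im (x + y) = Im x + Im y. Proof. by case: x; case: y. Qed.

Lemma adjmxE m n (A : 'M[R[i]]_(m, n)) r c : adjmx A r c = conjc (A c r).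
Proof. by rewrite /adjmx !mxE. Qed.

Lemma Pform_herm (b g : 'cV[R]_3) (d : 'M[R]_3) : adjmx (Pform b g d) = Pform b g d.
Proof.
apply/matrixP => r c; case: (mxtens_indexP r) => a k; case: (mxtens_indexP c) => a' k'.
rewrite adjmxE.
case: (ord2P a) => ->; case: (ord2P k) => ->; case: (ord2P a') => ->; case: (ord2P k') => ->;
rewrite !(Eall R) cconj; congr Complex; lra.
Qed.

Lemma Pform_tr (b g : 'cV[R]_3) (d : 'M[R]_3) : \tr (Pform b g d) = 1.
Proof.
rewrite /mxtrace sum4 !(Eall R) !cadd (_ : (1 : R[i]) = Complex 1 0) //; congr Complex; lra.
Qed.

Lemma rho00 (b : 'cV[R]_3) : rho_of b i0 i0 = Complex (2^-1 * (1 + b j2 0)) 0.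
Proof. rewrite /rho_of !mxE summxE sum3 !mxE ?pauliE c2 /= ?e01 ?e10 ?eqxx /=. congr Complex; ring. Qed.
Lemma rho01 (b : 'cV[R]_3) : rho_of b i0 i1 = Complex (2^-1 * b j0 0) (2^-1 * (- b j1 0)).
Proof. rewrite /rho_of !mxE summxE sum3 !mxE ?pauliE c2 /= ?e01 ?e10 ?eqxx /=. congr Complex; ring. Qed.
Lemma rho10 (b : 'cV[R]_3) : rho_of b i1 i0 = Complex (2^-1 * b j0 0) (2^-1 * b j1 0).
Proof. rewrite /rho_of !mxE summxE sum3 !mxE ?pauliE c2 /= ?e01 ?e10 ?eqxx /=. congr Complex; ring. Qed.
Lemma rho11 (b : 'cV[R]_3) : rho_of b i1 i1 = Complex (2^-1 * (1 - b j2 0)) 0.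
Proof. rewrite /rho_of !mxE summxE sum3 !mxE ?pauliE c2 /= ?e01 ?e10 ?eqxx /=. congr Complex; ring. Qed.
Definition rhoall := (rho00, rho01, rho10, rho11).

Lemma Pform_ptrace (b g : 'cV[R]_3) (d : 'M[R]_3) : ptrace2 (Pform b g d) = rho_of b.
Proof.
apply/matrixP => a a'; rewrite mxE sum2.
case: (ord2P a) => ->; case: (ord2P a') => ->;
rewrite !(Eall R) cadd rhoall; congr Complex; lra.
Qed.

Lemma adjmxM m n p (A : 'M[R[i]]_(m, n)) (B : 'M[R[i]]_(n, p)) :
  adjmx (A *m B) = adjmx B *m adjmx A.
Proof. by rewrite /adjmx map_mxM trmx_mul. Qed.

Lemma proj_psd (P : 'M[R[i]]_(2*2)) : P = adjmx P -> P *m P = P -> psd P.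
Proof.
move=> HH HP; split=> // v.
have -> : adjmx v *m P *m v = adjmx (P *m v) *m (P *m v).
  by rewrite adjmxM -HH -{1}HP !mulmxA.
rewrite mxE; apply: sumr_ge0 => i _; rewrite /adjmx !mxE mulrC.
exact: mulcJ_ge0.
Qed.

Lemma Pform_purif_iff (b g : 'cV[R]_3) (d : 'M[R]_3) :
  purification (rho_of b) (Pform b g d) <-> Pform b g d *m Pform b g d = Pform b g d.
Proof.
split; first by case=> -[_ [_ ->]].
move=> HP; split; last exact: Pform_ptrace.
split; last by split=> //; exact: Pform_tr.
by apply: proj_psd => //; rewrite Pform_herm.
Qed.

Definition gP (P : 'M[R[i]]_(2*2)) : 'cV[R]_3 := \col_(i < 3) nth 0 [:: Re (P (mt i0 i0) (mt i0 i1)) + Re (P (mt i0 i1) (mt i0 i0)) + Re (P (mt i1 i0) (mt i1 i1)) + Re (P (mt i1 i1) (mt i1 i0)); - Im (P (mt i0 i0) (mt i0 i1)) + Im (P (mt i0 i1) (mt i0 i0)) - Im (P (mt i1 i0) (mt i1 i1)) + Im (P (mt i1 i1) (mt i1 i0)); Re (P (mt i0 i0) (mt i0 i0)) - Re (P (mt i0 i1) (mt i0 i1)) + Re (P (mt i1 i0) (mt i1 i0)) - Re (P (mt i1 i1) (mt i1 i1))] i.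
Definition dP (P : 'M[R[i]]_(2*2)) : 'M[R]_3 := \matrix_(i < 3, j < 3) nth 0 (nth [::] [:: [:: Re (P (mt i0 i0) (mt i1 i1)) + Re (P (mt i0 i1) (mt i1 i0)) + Re (P (mt i1 i0) (mt i0 i1)) + Re (P (mt i1 i1) (mt i0 i0)); - Im (P (mt i0 i0) (mt i1 i1)) + Im (P (mt i0 i1) (mt i1 i0)) - Im (P (mt i1 i0) (mt i0 i1)) + Im (P (mt i1 i1) (mt i0 i0)); Re (P (mt i0 i0) (mt i1 i0)) - Re (P (mt i0 i1) (mt i1 i1)) + Re (P (mt i1 i0) (mt i0 i0)) - Re (P (mt i1 i1) (mt i0 i1))]; [:: - Im (P (mt i0 i0) (mt i1 i1)) - Im (P (mt i0 i1) (mt i1 i0)) + Im (P (mt i1 i0) (mt i0 i1)) + Im (P (mt i1 i1) (mt i0 i0)); - Re (P (mt i0 i0) (mt i1 i1)) + Re (P (mt i0 i1) (mt i1 i0)) + Re (P (mt i1 i0) (mt i0 i1)) - Re (P (mt i1 i1) (mt i0 i0)); - Im (P (mt i0 i0) (mt i1 i0)) + Im (P (mt i0 i1) (mt i1 i1)) + Im (P (mt i1 i0) (mt i0 i0)) - Im (P (mt i1 i1) (mt i0 i1))]; [:: Re (P (mt i0 i0) (mt i0 i1)) + Re (P (mt i0 i1) (mt i0 i0)) - Re (P (mt i1 i0) (mt i1 i1)) - Re (P (mt i1 i1) (mt i1 i0)); - Im (P (mt i0 i0) (mt i0 i1)) + Im (P (mt i0 i1) (mt i0 i0)) + Im (P (mt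 i1 i0) (mt i1 i1)) - Im (P (mt i1 i1) (mt i1 i0)); Re (P (mt i0 i0) (mt i0 i0)) - Re (P (mt i0 i1) (mt i0 i1)) - Re (P (mt i1 i0) (mt i1 i0)) + Re (P (mt i1 i1) (mt i1 i1))]] i) j.

Lemma gE0 (P : 'M[R[i]]_(2*2)) : gP P j0 0 = Re (P (mt i0 i0) (mt i0 i1)) + Re (P (mt i0 i1) (mt i0 i0)) + Re (P (mt i1 i0) (mt i1 i1)) + Re (P (mt i1 i1) (mt i1 i0)).
Proof. by rewrite mxE. Qed.
Lemma gE1 (P : 'M[R[i]]_(2*2)) : gP P j1 0 = - Im (P (mt i0 i0) (mt i0 i1)) + Im (P (mt i0 i1) (mt i0 i0)) - Im (P (mt i1 i0) (mt i1 i1)) + Im (P (mt i1 i1) (mt i1 i0)).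
Proof. by rewrite mxE. Qed.
Lemma gE2 (P : 'M[R[i]]_(2*2)) : gP P j2 0 = Re (P (mt i0 i0) (mt i0 i0)) - Re (P (mt i0 i1) (mt i0 i1)) + Re (P (mt i1 i0) (mt i1 i0)) - Re (P (mt i1 i1) (mt i1 i1)).
Proof. by rewrite mxE. Qed.
Lemma dE00 (P : 'M[R[i]]_(2*2)) : dP P j0 j0 = Re (P (mt i0 i0) (mt i1 i1)) + Re (P (mt i0 i1) (mt i1 i0)) + Re (P (mt i1 i0) (mt i0 i1)) + Re (P (mt i1 i1) (mt i0 i0)).
Proof. by rewrite mxE. Qed.
Lemma dE01 (P : 'M[R[i]]_(2*2)) : dP P j0 j1 = - Im (P (mt i0 i0) (mt i1 i1)) + Im (P (mt i0 i1) (mt i1 i0)) - Im (P (mt i1 i0) (mt i0 i1)) + Im (P (mt i1 i1) (mt i0 i0)).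
Proof. by rewrite mxE. Qed.
Lemma dE02 (P : 'M[R[i]]_(2*2)) : dP P j0 j2 = Re (P (mt i0 i0) (mt i1 i0)) - Re (P (mt i0 i1) (mt i1 i1)) + Re (P (mt i1 i0) (mt i0 i0)) - Re (P (mt i1 i1) (mt i0 i1)).
Proof. by rewrite mxE. Qed.
Lemma dE10 (P : 'M[R[i]]_(2*2)) : dP P j1 j0 = - Im (P (mt i0 i0) (mt i1 i1)) - Im (P (mt i0 i1) (mt i1 i0)) + Im (P (mt i1 i0) (mt i0 i1)) + Im (P (mt i1 i1) (mt i0 i0)).
Proof. by rewrite mxE. Qed.
Lemma dE11 (P : 'M[R[i]]_(2*2)) : dP P j1 j1 = - Re (P (mt i0 i0) (mt i1 i1)) + Re (P (mt i0 i1) (mt i1 i0)) + Re (P (mt i1 i0) (mt i0 i1)) - Re (P (mt i1 i1) (mt i0 i0)).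
Proof. by rewrite mxE. Qed.
Lemma dE12 (P : 'M[R[i]]_(2*2)) : dP P j1 j2 = - Im (P (mt i0 i0) (mt i1 i0)) + Im (P (mt i0 i1) (mt i1 i1)) + Im (P (mt i1 i0) (mt i0 i0)) - Im (P (mt i1 i1) (mt i0 i1)).
Proof. by rewrite mxE. Qed.
Lemma dE20 (P : 'M[R[i]]_(2*2)) : dP P j2 j0 = Re (P (mt i0 i0) (mt i0 i1)) + Re (P (mt i0 i1) (mt i0 i0)) - Re (P (mt i1 i0) (mt i1 i1)) - Re (P (mt i1 i1) (mt i1 i0)).
Proof. by rewrite mxE. Qed.
Lemma dE21 (P : 'M[R[i]]_(2*2)) : dP P j2 j1 = - Im (P (mt i0 i0) (mt i0 i1)) + Im (P (mt i0 i1) (mt i0 i0)) + Im (P (mt i1 i0) (mt i1 i1)) - Im (P (mt i1 i1) (mt i1 i0)).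
Proof. by rewrite mxE. Qed.
Lemma dE22 (P : 'M[R[i]]_(2*2)) : dP P j2 j2 = Re (P (mt i0 i0) (mt i0 i0)) - Re (P (mt i0 i1) (mt i0 i1)) - Re (P (mt i1 i0) (mt i1 i0)) + Re (P (mt i1 i1) (mt i1 i1)).
Proof. by rewrite mxE. Qed.
Definition gdE := (gE0, gE1, gE2, dE00, dE01, dE02, dE10, dE11, dE12, dE20, dE21, dE22).


Lemma ptrace2E (P : 'M[R[i]]_(2*2)) a a' : ptrace2 P a a' = \sum_(k < 2) P (mt a k) (mt a' k).
Proof. by rewrite mxE. Qed.

Lemma herm_ent {P : 'M[R[i]]_(2*2)} (H : P = adjmx P) r c :
  Re (P r c) = Re (P c r) /\ Im (P r c) = - Im (P c r).
Proof.
have := congr1 (fun M : 'M[R[i]]_(2*2) => M r c) H; rewrite /adjmx !mxE.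
by case: (P r c) => x y; case: (P c r) => u w /= [-> ->].
Qed.

Ltac hermgen H a k a' k' := let h1 := fresh "hh" in let h2 := fresh "hh" in
  have [h1 h2] := herm_ent H (mt a k) (mt a' k').

Lemma purif_form (b : 'cV[R]_3) (P : 'M[R[i]]_(2*2)) :
  purification (rho_of b) P -> P = Pform b (gP P) (dP P).
Proof.
case=> -[[HH _] [Htr _]] Hpt.
have [t1 t2] : Re (\tr P) = 1 /\ Im (\tr P) = 0 by rewrite Htr.
rewrite /mxtrace sum4 !ReD !ImD in t1 t2.
have pt := fun a a' => congr1 (fun M : 'M[R[i]]_2 => M a a') Hpt.
have := pt i0 i0; have := pt i0 i1; have := pt i1 i0; have := pt i1 i1.
rewrite !ptrace2E !sum2 !rhoall.
move=> /(congr1 (fun x => (Re x, Im x))) /= [p1 p2].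
move=> /(congr1 (fun x => (Re x, Im x))) /= [p3 p4].
move=> /(congr1 (fun x => (Re x, Im x))) /= [p5 p6].
move=> /(congr1 (fun x => (Re x, Im x))) /= [p7 p8].
rewrite !ReD !ImD in p1 p2 p3 p4 p5 p6 p7 p8.
have [hr0000 hi0000] := herm_ent HH (mt i0 i0) (mt i0 i0).
have [hr0001 hi0001] := herm_ent HH (mt i0 i0) (mt i0 i1).
have [hr0010 hi0010] := herm_ent HH (mt i0 i0) (mt i1 i0).
have [hr0011 hi0011] := herm_ent HH (mt i0 i0) (mt i1 i1).
have [hr0100 hi0100] := herm_ent HH (mt i0 i1) (mt i0 i0).
have [hr0101 hi0101] := herm_ent HH (mt i0 i1) (mt i0 i1).
have [hr0110 hi0110] := herm_ent HH (mt i0 i1) (mt i1 i0).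
have [hr0111 hi0111] := herm_ent HH (mt i0 i1) (mt i1 i1).
have [hr1000 hi1000] := herm_ent HH (mt i1 i0) (mt i0 i0).
have [hr1001 hi1001] := herm_ent HH (mt i1 i0) (mt i0 i1).
have [hr1010 hi1010] := herm_ent HH (mt i1 i0) (mt i1 i0).
have [hr1011 hi1011] := herm_ent HH (mt i1 i0) (mt i1 i1).
have [hr1100 hi1100] := herm_ent HH (mt i1 i1) (mt i0 i0).
have [hr1101 hi1101] := herm_ent HH (mt i1 i1) (mt i0 i1).
have [hr1110 hi1110] := herm_ent HH (mt i1 i1) (mt i1 i0).
have [hr1111 hi1111] := herm_ent HH (mt i1 i1) (mt i1 i1).
have F0000 : P (mt i0 i0) (mt i0 i0) = Pform b (gP P) (dP P) (mt i0 i0) (mt i0 i0).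
{ rewrite !(Eall R) !gdE; apply: ceqC; clear - hr0000 hi0000 hr0101 hi0101 hr1010 hi1010 hr1111 hi1111 t1 t2 p1 p2 p7 p8; lra. }
have F0001 : P (mt i0 i0) (mt i0 i1) = Pform b (gP P) (dP P) (mt i0 i0) (mt i0 i1).
{ rewrite !(Eall R) !gdE; apply: ceqC; clear - hr0001 hi0001 hr0100 hi0100 hr1011 hi1011 hr1110 hi1110 ; lra. }
have F0010 : P (mt i0 i0) (mt i1 i0) = Pform b (gP P) (dP P) (mt i0 i0) (mt i1 i0).
{ rewrite !(Eall R) !gdE; apply: ceqC; clear - hr0010 hi0010 hr0111 hi0111 hr1000 hi1000 hr1101 hi1101 p3 p4 p5 p6; lra. }
have F0011 : P (mt i0 i0) (mt i1 i1) = Pform b (gP P) (dP P) (mt i0 i0) (mt i1 i1).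
{ rewrite !(Eall R) !gdE; apply: ceqC; clear - hr0011 hi0011 hr0110 hi0110 hr1001 hi1001 hr1100 hi1100 ; lra. }
have F0100 : P (mt i0 i1) (mt i0 i0) = Pform b (gP P) (dP P) (mt i0 i1) (mt i0 i0).
{ rewrite !(Eall R) !gdE; apply: ceqC; clear - hr0001 hi0001 hr0100 hi0100 hr1011 hi1011 hr1110 hi1110 ; lra. }
have F0101 : P (mt i0 i1) (mt i0 i1) = Pform b (gP P) (dP P) (mt i0 i1) (mt i0 i1).
{ rewrite !(Eall R) !gdE; apply: ceqC; clear - hr0000 hi0000 hr0101 hi0101 hr1010 hi1010 hr1111 hi1111 t1 t2 p1 p2 p7 p8; lra. }
have F0110 : P (mt i0 i1) (mt i1 i0) = Pform b (gP P) (dP P) (mt i0 i1) (mt i1 i0).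
{ rewrite !(Eall R) !gdE; apply: ceqC; clear - hr0011 hi0011 hr0110 hi0110 hr1001 hi1001 hr1100 hi1100 ; lra. }
have F0111 : P (mt i0 i1) (mt i1 i1) = Pform b (gP P) (dP P) (mt i0 i1) (mt i1 i1).
{ rewrite !(Eall R) !gdE; apply: ceqC; clear - hr0010 hi0010 hr0111 hi0111 hr1000 hi1000 hr1101 hi1101 p3 p4 p5 p6; lra. }
have F1000 : P (mt i1 i0) (mt i0 i0) = Pform b (gP P) (dP P) (mt i1 i0) (mt i0 i0).
{ rewrite !(Eall R) !gdE; apply: ceqC; clear - hr0010 hi0010 hr0111 hi0111 hr1000 hi1000 hr1101 hi1101 p3 p4 p5 p6; lra. }
have F1001 : P (mt i1 i0) (mt i0 i1) = Pform b (gP P) (dP P) (mt i1 i0) (mt i0 i1).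
{ rewrite !(Eall R) !gdE; apply: ceqC; clear - hr0011 hi0011 hr0110 hi0110 hr1001 hi1001 hr1100 hi1100 ; lra. }
have F1010 : P (mt i1 i0) (mt i1 i0) = Pform b (gP P) (dP P) (mt i1 i0) (mt i1 i0).
{ rewrite !(Eall R) !gdE; apply: ceqC; clear - hr0000 hi0000 hr0101 hi0101 hr1010 hi1010 hr1111 hi1111 t1 t2 p1 p2 p7 p8; lra. }
have F1011 : P (mt i1 i0) (mt i1 i1) = Pform b (gP P) (dP P) (mt i1 i0) (mt i1 i1).
{ rewrite !(Eall R) !gdE; apply: ceqC; clear - hr0001 hi0001 hr0100 hi0100 hr1011 hi1011 hr1110 hi1110 ; lra. }
have F1100 : P (mt i1 i1) (mt i0 i0) = Pform b (gP P) (dP P) (mt i1 i1) (mt i0 i0).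
{ rewrite !(Eall R) !gdE; apply: ceqC; clear - hr0011 hi0011 hr0110 hi0110 hr1001 hi1001 hr1100 hi1100 ; lra. }
have F1101 : P (mt i1 i1) (mt i0 i1) = Pform b (gP P) (dP P) (mt i1 i1) (mt i0 i1).
{ rewrite !(Eall R) !gdE; apply: ceqC; clear - hr0010 hi0010 hr0111 hi0111 hr1000 hi1000 hr1101 hi1101 p3 p4 p5 p6; lra. }
have F1110 : P (mt i1 i1) (mt i1 i0) = Pform b (gP P) (dP P) (mt i1 i1) (mt i1 i0).
{ rewrite !(Eall R) !gdE; apply: ceqC; clear - hr0001 hi0001 hr0100 hi0100 hr1011 hi1011 hr1110 hi1110 ; lra. }
have F1111 : P (mt i1 i1) (mt i1 i1) = Pform b (gP P) (dP P) (mt i1 i1) (mt i1 i1).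
{ rewrite !(Eall R) !gdE; apply: ceqC; clear - hr0000 hi0000 hr0101 hi0101 hr1010 hi1010 hr1111 hi1111 t1 t2 p1 p2 p7 p8; lra. }
apply/matrixP => r c; case: (mxtens_indexP r) => a k; case: (mxtens_indexP c) => a' k'.
case: (ord2P a) => ->; case: (ord2P k) => ->; case: (ord2P a') => ->; case: (ord2P k') => ->; assumption.

Qed.

Ltac entgen H a k a' k' := let h1 := fresh "h" in let h2 := fresh "h" in
  have := congr1 (fun M : 'M[R[i]]_(2*2) => M (mt a k) (mt a' k')) H; rewrite !(Eall R) => /cinj [h1 h2].

Lemma Pform_inj (b g g' : 'cV[R]_3) (d d' : 'M[R]_3) :
  Pform b g d = Pform b g' d' -> g = g' /\ d = d'.
Proof.
move=> H.
entgen H i0 i0 i0 i0.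
entgen H i0 i0 i0 i1.
entgen H i0 i0 i1 i0.
entgen H i0 i0 i1 i1.
entgen H i0 i1 i0 i0.
entgen H i0 i1 i0 i1.
entgen H i0 i1 i1 i0.
entgen H i0 i1 i1 i1.
entgen H i1 i0 i0 i0.
entgen H i1 i0 i0 i1.
entgen H i1 i0 i1 i0.
entgen H i1 i0 i1 i1.
entgen H i1 i1 i0 i0.
entgen H i1 i1 i0 i1.
entgen H i1 i1 i1 i0.
entgen H i1 i1 i1 i1.
clear H; split; apply/matrixP => i j.
- rewrite (ord1P j); case: (ord3P i) => ->; lra.
- case: (ord3P i) => ->; case: (ord3P j) => ->; lra.
Qed.

End Part3.


Arguments Cond {R}.
Section Part4.
Variable R : rcfType.

Definition nb (b : 'cV[R]_3) := b j0 0 ^+ 2 + b j1 0 ^+ 2 + b j2 0 ^+ 2.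

Lemma sq3 (x y z : R) : x ^+ 2 + y ^+ 2 + z ^+ 2 = 0 -> x = 0 /\ y = 0 /\ z = 0.
Proof.
move=> h; have hx := sqr_ge0 x; have hy := sqr_ge0 y; have hz := sqr_ge0 z.
have ex : x ^+ 2 = 0 by lra. have ey : y ^+ 2 = 0 by lra. have ez : z ^+ 2 = 0 by lra.
by move/eqP: ex; move/eqP: ey; move/eqP: ez; rewrite !sqrf_eq0 => /eqP -> /eqP -> /eqP ->.
Qed.

Definition GS (b g : 'cV[R]_3) (d : 'M[R]_3) : Prop :=
  (d j0 j0 * b j0 0 + d j1 j0 * b j1 0 + d j2 j0 * b j2 0 = g j0 0) /\ (d j0 j1 * b j0 0 + d j1 j1 * b j1 0 + d j2 j1 * b j2 0 = g j1 0) /\ (d j0 j2 * b j0 0 + d j1 j2 * b j1 0 + d j2 j2 * b j2 0 = g j2 0).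

Definition DS (b : 'cV[R]_3) (d : 'M[R]_3) : Prop :=
  (d j0 j0 * d j0 j0 + d j0 j1 * d j0 j1 + d j0 j2 * d j0 j2 = (1 - nb b) * 1 + b j0 0 * b j0 0) /\
  (d j0 j0 * d j1 j0 + d j0 j1 * d j1 j1 + d j0 j2 * d j1 j2 = (1 - nb b) * 0 + b j0 0 * b j1 0) /\
  (d j0 j0 * d j2 j0 + d j0 j1 * d j2 j1 + d j0 j2 * d j2 j2 = (1 - nb b) * 0 + b j0 0 * b j2 0) /\
  (d j1 j0 * d j0 j0 + d j1 j1 * d j0 j1 + d j1 j2 * d j0 j2 = (1 - nb b) * 0 + b j1 0 * b j0 0) /\
  (d j1 j0 * d j1 j0 + d j1 j1 * d j1 j1 + d j1 j2 * d j1 j2 = (1 - nb b) * 1 + b j1 0 * b j1 0) /\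
  (d j1 j0 * d j2 j0 + d j1 j1 * d j2 j1 + d j1 j2 * d j2 j2 = (1 - nb b) * 0 + b j1 0 * b j2 0) /\
  (d j2 j0 * d j0 j0 + d j2 j1 * d j0 j1 + d j2 j2 * d j0 j2 = (1 - nb b) * 0 + b j2 0 * b j0 0) /\
  (d j2 j0 * d j1 j0 + d j2 j1 * d j1 j1 + d j2 j2 * d j1 j2 = (1 - nb b) * 0 + b j2 0 * b j1 0) /\
  (d j2 j0 * d j2 j0 + d j2 j1 * d j2 j1 + d j2 j2 * d j2 j2 = (1 - nb b) * 1 + b j2 0 * b j2 0) /\
  (d j0 j0 * (d j1 j1 * d j2 j2 - d j1 j2 * d j2 j1) - d j0 j1 * (d j1 j0 * d j2 j2 - d j1 j2 * d j2 j0) + d j0 j2 * (d j1 j0 * d j2 j1 - d j1 j1 * d j2 j0) = nb b - 1).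

Lemma Cond_GS_DS (b g : 'cV[R]_3) (d : 'M[R]_3) : Cond b g d -> GS b g d /\ DS b d.
Proof.
move=> [hC1 [hC20 [hC21 [hC22 [hC30 [hC31 [hC32 [hC400 [hC401 [hC402 [hC410 [hC411 [hC412 [hC420 [hC421 hC422]]]]]]]]]]]]]]].
split; first by split; [|split].
have m000 := congr1 (GRing.mul (d j0 j0)) hC400.
have m001 := congr1 (GRing.mul (d j0 j1)) hC401.
have m002 := congr1 (GRing.mul (d j0 j2)) hC402.
have n00 := congr1 (GRing.mul (b j0 0)) hC20.
have dd00 : d j0 j0 * d j0 j0 + d j0 j1 * d j0 j1 + d j0 j2 * d j0 j2 = b j0 0 * b j0 0 - (d j0 j0 * (d j1 j1 * d j2 j2 - d j1 j2 * d j2 j1) - d j0 j1 * (d j1 j0 * d j2 j2 - d j1 j2 * d j2 j0) + d j0 j2 * (d j1 j0 * d j2 j1 - d j1 j1 * d j2 j0)) * 1.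
{ clear - m000 m001 m002 n00. lra. }
clear m000 m001 m002 n00.
have m010 := congr1 (GRing.mul (d j0 j0)) hC410.
have m011 := congr1 (GRing.mul (d j0 j1)) hC411.
have m012 := congr1 (GRing.mul (d j0 j2)) hC412.
have n01 := congr1 (GRing.mul (b j1 0)) hC20.
have dd01 : d j0 j0 * d j1 j0 + d j0 j1 * d j1 j1 + d j0 j2 * d j1 j2 = b j0 0 * b j1 0 - (d j0 j0 * (d j1 j1 * d j2 j2 - d j1 j2 * d j2 j1) - d j0 j1 * (d j1 j0 * d j2 j2 - d j1 j2 * d j2 j0) + d j0 j2 * (d j1 j0 * d j2 j1 - d j1 j1 * d j2 j0)) * 0.
{ clear - m010 m011 m012 n01. lra. }
clear m010 m011 m012 n01.
have m020 := congr1 (GRing.mul (d j0 j0)) hC420.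
have m021 := congr1 (GRing.mul (d j0 j1)) hC421.
have m022 := congr1 (GRing.mul (d j0 j2)) hC422.
have n02 := congr1 (GRing.mul (b j2 0)) hC20.
have dd02 : d j0 j0 * d j2 j0 + d j0 j1 * d j2 j1 + d j0 j2 * d j2 j2 = b j0 0 * b j2 0 - (d j0 j0 * (d j1 j1 * d j2 j2 - d j1 j2 * d j2 j1) - d j0 j1 * (d j1 j0 * d j2 j2 - d j1 j2 * d j2 j0) + d j0 j2 * (d j1 j0 * d j2 j1 - d j1 j1 * d j2 j0)) * 0.
{ clear - m020 m021 m022 n02. lra. }
clear m020 m021 m022 n02.
have m100 := congr1 (GRing.mul (d j1 j0)) hC400.
have m101 := congr1 (GRing.mul (d j1 j1)) hC401.
have m102 := congr1 (GRing.mul (d j1 j2)) hC402.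
have n10 := congr1 (GRing.mul (b j0 0)) hC21.
have dd10 : d j1 j0 * d j0 j0 + d j1 j1 * d j0 j1 + d j1 j2 * d j0 j2 = b j1 0 * b j0 0 - (d j0 j0 * (d j1 j1 * d j2 j2 - d j1 j2 * d j2 j1) - d j0 j1 * (d j1 j0 * d j2 j2 - d j1 j2 * d j2 j0) + d j0 j2 * (d j1 j0 * d j2 j1 - d j1 j1 * d j2 j0)) * 0.
{ clear - m100 m101 m102 n10. lra. }
clear m100 m101 m102 n10.
have m110 := congr1 (GRing.mul (d j1 j0)) hC410.
have m111 := congr1 (GRing.mul (d j1 j1)) hC411.
have m112 := congr1 (GRing.mul (d j1 j2)) hC412.
have n11 := congr1 (GRing.mul (b j1 0)) hC21.
have dd11 : d j1 j0 * d j1 j0 + d j1 j1 * d j1 j1 + d j1 j2 * d j1 j2 = b j1 0 * b j1 0 - (d j0 j0 * (d j1 j1 * d j2 j2 - d j1 j2 * d j2 j1) - d j0 j1 * (d j1 j0 * d j2 j2 - d j1 j2 * d j2 j0) + d j0 j2 * (d j1 j0 * d j2 j1 - d j1 j1 * d j2 j0)) * 1.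
{ clear - m110 m111 m112 n11. lra. }
clear m110 m111 m112 n11.
have m120 := congr1 (GRing.mul (d j1 j0)) hC420.
have m121 := congr1 (GRing.mul (d j1 j1)) hC421.
have m122 := congr1 (GRing.mul (d j1 j2)) hC422.
have n12 := congr1 (GRing.mul (b j2 0)) hC21.
have dd12 : d j1 j0 * d j2 j0 + d j1 j1 * d j2 j1 + d j1 j2 * d j2 j2 = b j1 0 * b j2 0 - (d j0 j0 * (d j1 j1 * d j2 j2 - d j1 j2 * d j2 j1) - d j0 j1 * (d j1 j0 * d j2 j2 - d j1 j2 * d j2 j0) + d j0 j2 * (d j1 j0 * d j2 j1 - d j1 j1 * d j2 j0)) * 0.
{ clear - m120 m121 m122 n12. lra. }
clear m120 m121 m122 n12.
have m200 := congr1 (GRing.mul (d j2 j0)) hC400.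
have m201 := congr1 (GRing.mul (d j2 j1)) hC401.
have m202 := congr1 (GRing.mul (d j2 j2)) hC402.
have n20 := congr1 (GRing.mul (b j0 0)) hC22.
have dd20 : d j2 j0 * d j0 j0 + d j2 j1 * d j0 j1 + d j2 j2 * d j0 j2 = b j2 0 * b j0 0 - (d j0 j0 * (d j1 j1 * d j2 j2 - d j1 j2 * d j2 j1) - d j0 j1 * (d j1 j0 * d j2 j2 - d j1 j2 * d j2 j0) + d j0 j2 * (d j1 j0 * d j2 j1 - d j1 j1 * d j2 j0)) * 0.
{ clear - m200 m201 m202 n20. lra. }
clear m200 m201 m202 n20.
have m210 := congr1 (GRing.mul (d j2 j0)) hC410.
have m211 := congr1 (GRing.mul (d j2 j1)) hC411.
have m212 := congr1 (GRing.mul (d j2 j2)) hC412.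
have n21 := congr1 (GRing.mul (b j1 0)) hC22.
have dd21 : d j2 j0 * d j1 j0 + d j2 j1 * d j1 j1 + d j2 j2 * d j1 j2 = b j2 0 * b j1 0 - (d j0 j0 * (d j1 j1 * d j2 j2 - d j1 j2 * d j2 j1) - d j0 j1 * (d j1 j0 * d j2 j2 - d j1 j2 * d j2 j0) + d j0 j2 * (d j1 j0 * d j2 j1 - d j1 j1 * d j2 j0)) * 0.
{ clear - m210 m211 m212 n21. lra. }
clear m210 m211 m212 n21.
have m220 := congr1 (GRing.mul (d j2 j0)) hC420.
have m221 := congr1 (GRing.mul (d j2 j1)) hC421.
have m222 := congr1 (GRing.mul (d j2 j2)) hC422.
have n22 := congr1 (GRing.mul (b j2 0)) hC22.
have dd22 : d j2 j0 * d j2 j0 + d j2 j1 * d j2 j1 + d j2 j2 * d j2 j2 = b j2 0 * b j2 0 - (d j0 j0 * (d j1 j1 * d j2 j2 - d j1 j2 * d j2 j1) - d j0 j1 * (d j1 j0 * d j2 j2 - d j1 j2 * d j2 j0) + d j0 j2 * (d j1 j0 * d j2 j1 - d j1 j1 * d j2 j0)) * 1.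
{ clear - m220 m221 m222 n22. lra. }
clear m220 m221 m222 n22.
have q0 := congr1 (GRing.mul (g j0 0)) hC30.
have r0 := congr1 (GRing.mul (b j0 0)) hC20.
have q1 := congr1 (GRing.mul (g j1 0)) hC31.
have r1 := congr1 (GRing.mul (b j1 0)) hC21.
have q2 := congr1 (GRing.mul (g j2 0)) hC32.
have r2 := congr1 (GRing.mul (b j2 0)) hC22.
have hDet : d j0 j0 * (d j1 j1 * d j2 j2 - d j1 j2 * d j2 j1) - d j0 j1 * (d j1 j0 * d j2 j2 - d j1 j2 * d j2 j0) + d j0 j2 * (d j1 j0 * d j2 j1 - d j1 j1 * d j2 j0) = nb b - 1.
{ clear - hC1 q0 q1 q2 r0 r1 r2 dd00 dd11 dd22. rewrite /nb. lra. }
rewrite /DS /nb. rewrite /nb in hDet. by repeat split; lra.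
Qed.


Lemma GS_DS_Cond (b g : 'cV[R]_3) (d : 'M[R]_3) : GS b g d -> DS b d -> Cond b g d.
Proof.
move=> [hG0 [hG1 hG2]] [hDD00 [hDD01 [hDD02 [hDD10 [hDD11 [hDD12 [hDD20 [hDD21 [hDD22 hDet]]]]]]]]].
have p00 := congr1 (GRing.mul (d j0 j0)) hG0.
have p01 := congr1 (GRing.mul (d j0 j1)) hG1.
have p02 := congr1 (GRing.mul (d j0 j2)) hG2.
have s00 := congr1 (GRing.mul (b j0 0)) hDD00.
have s01 := congr1 (GRing.mul (b j1 0)) hDD01.
have s02 := congr1 (GRing.mul (b j2 0)) hDD02.
have hC20 : d j0 j0 * g j0 0 + d j0 j1 * g j1 0 + d j0 j2 * g j2 0 = b j0 0.
{ clear - p00 p01 p02 s00 s01 s02. rewrite /nb in p00 p01 p02 s00 s01 s02. lra. }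
clear p00 p01 p02 s00 s01 s02.
have p10 := congr1 (GRing.mul (d j1 j0)) hG0.
have p11 := congr1 (GRing.mul (d j1 j1)) hG1.
have p12 := congr1 (GRing.mul (d j1 j2)) hG2.
have s10 := congr1 (GRing.mul (b j0 0)) hDD10.
have s11 := congr1 (GRing.mul (b j1 0)) hDD11.
have s12 := congr1 (GRing.mul (b j2 0)) hDD12.
have hC21 : d j1 j0 * g j0 0 + d j1 j1 * g j1 0 + d j1 j2 * g j2 0 = b j1 0.
{ clear - p10 p11 p12 s10 s11 s12. rewrite /nb in p10 p11 p12 s10 s11 s12. lra. }
clear p10 p11 p12 s10 s11 s12.
have p20 := congr1 (GRing.mul (d j2 j0)) hG0.
have p21 := congr1 (GRing.mul (d j2 j1)) hG1.
have p22 := congr1 (GRing.mul (d j2 j2)) hG2.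
have s20 := congr1 (GRing.mul (b j0 0)) hDD20.
have s21 := congr1 (GRing.mul (b j1 0)) hDD21.
have s22 := congr1 (GRing.mul (b j2 0)) hDD22.
have hC22 : d j2 j0 * g j0 0 + d j2 j1 * g j1 0 + d j2 j2 * g j2 0 = b j2 0.
{ clear - p20 p21 p22 s20 s21 s22. rewrite /nb in p20 p21 p22 s20 s21 s22. lra. }
clear p20 p21 p22 s20 s21 s22.
have q0 := congr1 (GRing.mul (g j0 0)) hG0.
have r0 := congr1 (GRing.mul (b j0 0)) hC20.
have q1 := congr1 (GRing.mul (g j1 0)) hG1.
have r1 := congr1 (GRing.mul (b j1 0)) hC21.
have q2 := congr1 (GRing.mul (g j2 0)) hG2.
have r2 := congr1 (GRing.mul (b j2 0)) hC22.
have hg2 : g j0 0 ^+ 2 + g j1 0 ^+ 2 + g j2 0 ^+ 2 = nb b.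
{ clear - q0 r0 q1 r1 q2 r2. rewrite /nb. lra. }
clear q0 r0 q1 r1 q2 r2.
have hC1 : b j0 0 ^+ 2 + b j1 0 ^+ 2 + b j2 0 ^+ 2 + g j0 0 ^+ 2 + g j1 0 ^+ 2 + g j2 0 ^+ 2 + d j0 j0 ^+ 2 + d j0 j1 ^+ 2 + d j0 j2 ^+ 2 + d j1 j0 ^+ 2 + d j1 j1 ^+ 2 + d j1 j2 ^+ 2 + d j2 j0 ^+ 2 + d j2 j1 ^+ 2 + d j2 j2 ^+ 2 = 3.
{ clear - hg2 hDD00 hDD11 hDD22. rewrite /nb in hg2 hDD00 hDD11 hDD22. lra. }
have : (b j0 0 * g j0 0 - (d j1 j1 * d j2 j2 - d j1 j2 * d j2 j1) = d j0 j0) /\ (b j0 0 * g j1 0 - (d j1 j2 * d j2 j0 - d j1 j0 * d j2 j2) = d j0 j1) /\ (b j0 0 * g j2 0 - (d j1 j0 * d j2 j1 - d j1 j1 * d j2 j0) = d j0 j2) /\ (b j1 0 * g j0 0 - (d j2 j1 * d j0 j2 - d j2 j2 * d j0 j1) = d j1 j0) /\ (b j1 0 * g j1 0 - (d j2 j2 * d j0 j0 - d j2 j0 * d j0 j2) = d j1 j1) /\ (b j1 0 * g j2 0 - (d j2 j0 * d j0 j1 - d j2 j1 * d j0 j0) = d j1 j2) /\ (b j2 0 * g j0 0 - (d j0 j1 * d j1 j2 - d j0 j2 * d j1 j1) = d j2 j0) /\ (b j2 0 * g j1 0 - (d j0 j2 * d j1 j0 - d j0 j0 * d j1 j2) = d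 j2 j1) /\ (b j2 0 * g j2 0 - (d j0 j0 * d j1 j1 - d j0 j1 * d j1 j0) = d j2 j2).
{
have [hz|hnz] := eqVneq (nb b - 1) 0.
- have hz1 : nb b = 1 by lra.
  have t0 := congr1 (GRing.mul (b j0 0 ^+ 2)) hg2.
  have u0 := congr1 (GRing.mul (b j0 0)) hC20.
  have v0 := congr1 (GRing.mul (b j0 0 ^+ 2)) hz1.
  have hsq0 : (d j0 j0 - b j0 0 * g j0 0) ^+ 2 + (d j0 j1 - b j0 0 * g j1 0) ^+ 2 + (d j0 j2 - b j0 0 * g j2 0) ^+ 2 = 0.
  { clear - t0 u0 v0 hDD00 hz1. lra. }
  have [e00 [e01 e02]] := @sq3 _ _ _ hsq0.
  have t1 := congr1 (GRing.mul (b j1 0 ^+ 2)) hg2.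
  have u1 := congr1 (GRing.mul (b j1 0)) hC21.
  have v1 := congr1 (GRing.mul (b j1 0 ^+ 2)) hz1.
  have hsq1 : (d j1 j0 - b j1 0 * g j0 0) ^+ 2 + (d j1 j1 - b j1 0 * g j1 0) ^+ 2 + (d j1 j2 - b j1 0 * g j2 0) ^+ 2 = 0.
  { clear - t1 u1 v1 hDD11 hz1. lra. }
  have [e10 [e11 e12]] := @sq3 _ _ _ hsq1.
  have t2 := congr1 (GRing.mul (b j2 0 ^+ 2)) hg2.
  have u2 := congr1 (GRing.mul (b j2 0)) hC22.
  have v2 := congr1 (GRing.mul (b j2 0 ^+ 2)) hz1.
  have hsq2 : (d j2 j0 - b j2 0 * g j0 0) ^+ 2 + (d j2 j1 - b j2 0 * g j1 0) ^+ 2 + (d j2 j2 - b j2 0 * g j2 0) ^+ 2 = 0.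
  { clear - t2 u2 v2 hDD22 hz1. lra. }
  have [e20 [e21 e22]] := @sq3 _ _ _ hsq2.
  have w00 : d j0 j0 = b j0 0 * g j0 0 by lra.
  have w01 : d j0 j1 = b j0 0 * g j1 0 by lra.
  have w02 : d j0 j2 = b j0 0 * g j2 0 by lra.
  have w10 : d j1 j0 = b j1 0 * g j0 0 by lra.
  have w11 : d j1 j1 = b j1 0 * g j1 0 by lra.
  have w12 : d j1 j2 = b j1 0 * g j2 0 by lra.
  have w20 : d j2 j0 = b j2 0 * g j0 0 by lra.
  have w21 : d j2 j1 = b j2 0 * g j1 0 by lra.
  have w22 : d j2 j2 = b j2 0 * g j2 0 by lra.
  rewrite w00 w01 w02 w10 w11 w12 w20 w21 w22.
  by repeat split; ring.
- have dX00 : d j0 j0 * (g j0 0 * b j0 0 - d j0 j0) + d j0 j1 * (g j1 0 * b j0 0 - d j0 j1) + d j0 j2 * (g j2 0 * b j0 0 - d j0 j2) = (nb b - 1) * 1.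
  { have := congr1 (GRing.mul (b j0 0)) hC20. clear - hDD00 hC20. lra. }
  have dX01 : d j0 j0 * (g j0 0 * b j1 0 - d j1 j0) + d j0 j1 * (g j1 0 * b j1 0 - d j1 j1) + d j0 j2 * (g j2 0 * b j1 0 - d j1 j2) = (nb b - 1) * 0.
  { have := congr1 (GRing.mul (b j1 0)) hC20. clear - hDD01 hC20. lra. }
  have dX02 : d j0 j0 * (g j0 0 * b j2 0 - d j2 j0) + d j0 j1 * (g j1 0 * b j2 0 - d j2 j1) + d j0 j2 * (g j2 0 * b j2 0 - d j2 j2) = (nb b - 1) * 0.
  { have := congr1 (GRing.mul (b j2 0)) hC20. clear - hDD02 hC20. lra. }
  have dX10 : d j1 j0 * (g j0 0 * b j0 0 - d j0 j0) + d j1 j1 * (g j1 0 * b j0 0 - d j0 j1) + d j1 j2 * (g j2 0 * b j0 0 - d j0 j2) = (nb b - 1) * 0.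
  { have := congr1 (GRing.mul (b j0 0)) hC21. clear - hDD10 hC21. lra. }
  have dX11 : d j1 j0 * (g j0 0 * b j1 0 - d j1 j0) + d j1 j1 * (g j1 0 * b j1 0 - d j1 j1) + d j1 j2 * (g j2 0 * b j1 0 - d j1 j2) = (nb b - 1) * 1.
  { have := congr1 (GRing.mul (b j1 0)) hC21. clear - hDD11 hC21. lra. }
  have dX12 : d j1 j0 * (g j0 0 * b j2 0 - d j2 j0) + d j1 j1 * (g j1 0 * b j2 0 - d j2 j1) + d j1 j2 * (g j2 0 * b j2 0 - d j2 j2) = (nb b - 1) * 0.
  { have := congr1 (GRing.mul (b j2 0)) hC21. clear - hDD12 hC21. lra. }
  have dX20 : d j2 j0 * (g j0 0 * b j0 0 - d j0 j0) + d j2 j1 * (g j1 0 * b j0 0 - d j0 j1) + d j2 j2 * (g j2 0 * b j0 0 - d j0 j2) = (nb b - 1) * 0.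
  { have := congr1 (GRing.mul (b j0 0)) hC22. clear - hDD20 hC22. lra. }
  have dX21 : d j2 j0 * (g j0 0 * b j1 0 - d j1 j0) + d j2 j1 * (g j1 0 * b j1 0 - d j1 j1) + d j2 j2 * (g j2 0 * b j1 0 - d j1 j2) = (nb b - 1) * 0.
  { have := congr1 (GRing.mul (b j1 0)) hC22. clear - hDD21 hC22. lra. }
  have dX22 : d j2 j0 * (g j0 0 * b j2 0 - d j2 j0) + d j2 j1 * (g j1 0 * b j2 0 - d j2 j1) + d j2 j2 * (g j2 0 * b j2 0 - d j2 j2) = (nb b - 1) * 1.
  { have := congr1 (GRing.mul (b j2 0)) hC22. clear - hDD22 hC22. lra. }
  have z00 : (nb b - 1) * ((g j0 0 * b j0 0 - d j0 j0) - (d j1 j1 * d j2 j2 - d j1 j2 * d j2 j1)) = 0.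
  { have y0 := congr1 (GRing.mul ((d j1 j1 * d j2 j2 - d j1 j2 * d j2 j1))) dX00. have y1 := congr1 (GRing.mul ((d j2 j1 * d j0 j2 - d j2 j2 * d j0 j1))) dX10. have y2 := congr1 (GRing.mul ((d j0 j1 * d j1 j2 - d j0 j2 * d j1 j1))) dX20. have y3 := congr1 (GRing.mul ((g j0 0 * b j0 0 - d j0 j0))) hDet. clear - y0 y1 y2 y3. lra. }
  move/eqP: z00; rewrite mulf_eq0 (negbTE hnz) /= => /eqP z00.
  have z01 : (nb b - 1) * ((g j1 0 * b j0 0 - d j0 j1) - (d j1 j2 * d j2 j0 - d j1 j0 * d j2 j2)) = 0.
  { have y0 := congr1 (GRing.mul ((d j1 j2 * d j2 j0 - d j1 j0 * d j2 j2))) dX00. have y1 := congr1 (GRing.mul ((d j2 j2 * d j0 j0 - d j2 j0 * d j0 j2))) dX10. have y2 := congr1 (GRing.mul ((d j0 j2 * d j1 j0 - d j0 j0 * d j1 j2))) dX20. have y3 := congr1 (GRing.mul ((g j1 0 * b j0 0 - d j0 j1))) hDet. clear - y0 y1 y2 y3. lra. }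
  move/eqP: z01; rewrite mulf_eq0 (negbTE hnz) /= => /eqP z01.
  have z02 : (nb b - 1) * ((g j2 0 * b j0 0 - d j0 j2) - (d j1 j0 * d j2 j1 - d j1 j1 * d j2 j0)) = 0.
  { have y0 := congr1 (GRing.mul ((d j1 j0 * d j2 j1 - d j1 j1 * d j2 j0))) dX00. have y1 := congr1 (GRing.mul ((d j2 j0 * d j0 j1 - d j2 j1 * d j0 j0))) dX10. have y2 := congr1 (GRing.mul ((d j0 j0 * d j1 j1 - d j0 j1 * d j1 j0))) dX20. have y3 := congr1 (GRing.mul ((g j2 0 * b j0 0 - d j0 j2))) hDet. clear - y0 y1 y2 y3. lra. }
  move/eqP: z02; rewrite mulf_eq0 (negbTE hnz) /= => /eqP z02.
  have z10 : (nb b - 1) * ((g j0 0 * b j1 0 - d j1 j0) - (d j2 j1 * d j0 j2 - d j2 j2 * d j0 j1)) = 0.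
  { have y0 := congr1 (GRing.mul ((d j1 j1 * d j2 j2 - d j1 j2 * d j2 j1))) dX01. have y1 := congr1 (GRing.mul ((d j2 j1 * d j0 j2 - d j2 j2 * d j0 j1))) dX11. have y2 := congr1 (GRing.mul ((d j0 j1 * d j1 j2 - d j0 j2 * d j1 j1))) dX21. have y3 := congr1 (GRing.mul ((g j0 0 * b j1 0 - d j1 j0))) hDet. clear - y0 y1 y2 y3. lra. }
  move/eqP: z10; rewrite mulf_eq0 (negbTE hnz) /= => /eqP z10.
  have z11 : (nb b - 1) * ((g j1 0 * b j1 0 - d j1 j1) - (d j2 j2 * d j0 j0 - d j2 j0 * d j0 j2)) = 0.
  { have y0 := congr1 (GRing.mul ((d j1 j2 * d j2 j0 - d j1 j0 * d j2 j2))) dX01. have y1 := congr1 (GRing.mul ((d j2 j2 * d j0 j0 - d j2 j0 * d j0 j2))) dX11. have y2 := congr1 (GRing.mul ((d j0 j2 * d j1 j0 - d j0 j0 * d j1 j2))) dX21. have y3 := congr1 (GRing.mul ((g j1 0 * b j1 0 - d j1 j1))) hDet. clear - y0 y1 y2 y3. lra. }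
  move/eqP: z11; rewrite mulf_eq0 (negbTE hnz) /= => /eqP z11.
  have z12 : (nb b - 1) * ((g j2 0 * b j1 0 - d j1 j2) - (d j2 j0 * d j0 j1 - d j2 j1 * d j0 j0)) = 0.
  { have y0 := congr1 (GRing.mul ((d j1 j0 * d j2 j1 - d j1 j1 * d j2 j0))) dX01. have y1 := congr1 (GRing.mul ((d j2 j0 * d j0 j1 - d j2 j1 * d j0 j0))) dX11. have y2 := congr1 (GRing.mul ((d j0 j0 * d j1 j1 - d j0 j1 * d j1 j0))) dX21. have y3 := congr1 (GRing.mul ((g j2 0 * b j1 0 - d j1 j2))) hDet. clear - y0 y1 y2 y3. lra. }
  move/eqP: z12; rewrite mulf_eq0 (negbTE hnz) /= => /eqP z12.
  have z20 : (nb b - 1) * ((g j0 0 * b j2 0 - d j2 j0) - (d j0 j1 * d j1 j2 - d j0 j2 * d j1 j1)) = 0.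
  { have y0 := congr1 (GRing.mul ((d j1 j1 * d j2 j2 - d j1 j2 * d j2 j1))) dX02. have y1 := congr1 (GRing.mul ((d j2 j1 * d j0 j2 - d j2 j2 * d j0 j1))) dX12. have y2 := congr1 (GRing.mul ((d j0 j1 * d j1 j2 - d j0 j2 * d j1 j1))) dX22. have y3 := congr1 (GRing.mul ((g j0 0 * b j2 0 - d j2 j0))) hDet. clear - y0 y1 y2 y3. lra. }
  move/eqP: z20; rewrite mulf_eq0 (negbTE hnz) /= => /eqP z20.
  have z21 : (nb b - 1) * ((g j1 0 * b j2 0 - d j2 j1) - (d j0 j2 * d j1 j0 - d j0 j0 * d j1 j2)) = 0.
  { have y0 := congr1 (GRing.mul ((d j1 j2 * d j2 j0 - d j1 j0 * d j2 j2))) dX02. have y1 := congr1 (GRing.mul ((d j2 j2 * d j0 j0 - d j2 j0 * d j0 j2))) dX12. have y2 := congr1 (GRing.mul ((d j0 j2 * d j1 j0 - d j0 j0 * d j1 j2))) dX22. have y3 := congr1 (GRing.mul ((g j1 0 * b j2 0 - d j2 j1))) hDet. clear - y0 y1 y2 y3. lra. }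
  move/eqP: z21; rewrite mulf_eq0 (negbTE hnz) /= => /eqP z21.
  have z22 : (nb b - 1) * ((g j2 0 * b j2 0 - d j2 j2) - (d j0 j0 * d j1 j1 - d j0 j1 * d j1 j0)) = 0.
  { have y0 := congr1 (GRing.mul ((d j1 j0 * d j2 j1 - d j1 j1 * d j2 j0))) dX02. have y1 := congr1 (GRing.mul ((d j2 j0 * d j0 j1 - d j2 j1 * d j0 j0))) dX12. have y2 := congr1 (GRing.mul ((d j0 j0 * d j1 j1 - d j0 j1 * d j1 j0))) dX22. have y3 := congr1 (GRing.mul ((g j2 0 * b j2 0 - d j2 j2))) hDet. clear - y0 y1 y2 y3. lra. }
  move/eqP: z22; rewrite mulf_eq0 (negbTE hnz) /= => /eqP z22.
  by repeat split; lra.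
}
move=> [hC400 [hC401 [hC402 [hC410 [hC411 [hC412 [hC420 [hC421 hC422]]]]]]]].
rewrite /Cond; by repeat split.
Qed.


End Part4.


Arguments Cond {R}.
Arguments GS {R}.
Arguments DS {R}.
Arguments nb {R}.

Section Part5.
Variable R : rcfType.
Implicit Types (b g u v w : 'cV[R]_3) (d S : 'M[R]_3).

Lemma nb_ge0 b : 0 <= nb b.
Proof. by rewrite /nb !addr_ge0 ?sqr_ge0. Qed.

Lemma vnorm2 b : vnorm b ^+ 2 = nb b.
Proof. by rewrite /vnorm sum3 sqr_sqrtr // -/(nb b) nb_ge0. Qed.

Lemma vnorm1 v : vnorm v = 1 <-> nb v = 1.
Proof.
split=> [h|h]; first by rewrite -vnorm2 h expr1n.
by rewrite /vnorm sum3 -/(nb v) h sqrtr1.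
Qed.

Lemma eR01 : (((j0 == j1) : nat)%:R : R) = 0. Proof. by []. Qed.

Lemma G_iff b g d : g = d^T *m b <-> GS b g d.
Proof.
split=> [->|[h0 [h1 h2]]].
- by rewrite /GS !mxE !sum3 !mxE.
- apply/matrixP => i j; rewrite (ord1P j) !mxE sum3 !mxE.
  by case: (ord3P i) => ->; rewrite ?h0 ?h1 ?h2.
Qed.

Lemma ddE d i j : (d *m d^T) i j = d i j0 * d j j0 + d i j1 * d j j1 + d i j2 * d j j2.
Proof. by rewrite mxE sum3 !mxE. Qed.
Lemma rhsE (x : R) b i j : (x *: 1%:M + b *m b^T) i j = x * (i == j)%:R + b i 0 * b j 0.
Proof. by rewrite !mxE sum1 !mxE. Qed.

Lemma DS_iff b d : delta_system b d <-> DS b d.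
Proof.
rewrite /delta_system vnorm2 det3.
split=> [[H Hd]|].
- have e := fun i j => congr1 (fun M : 'M[R]_3 => M i j) H.
  have := e j0 j0; have := e j0 j1; have := e j0 j2; have := e j1 j0; have := e j1 j1;
  have := e j1 j2; have := e j2 j0; have := e j2 j1; have := e j2 j2.
  rewrite !ddE !rhsE !ejs /= ?mulr1n ?mulr0n.
  move=> ? ? ? ? ? ? ? ? ?.
  by rewrite /DS; repeat split.
- move=> [h00 [h01 [h02 [h10 [h11 [h12 [h20 [h21 [h22 hd]]]]]]]]].
  split=> //; apply/matrixP => i j; rewrite ddE rhsE.
  by case: (ord3P i) => ->; case: (ord3P j) => ->; rewrite ?ejs /= ?mulr1n ?mulr0n;
    [rewrite h00|rewrite h01|rewrite h02|rewrite h10|rewrite h11|rewrite h12|rewrite h20|rewrite h21|rewrite h22].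
Qed.

Lemma main_i b g d :
  purification (rho_of b) (Pform b g d) <-> (g = d^T *m b /\ delta_system b d).
Proof.
split.
- move/Pform_purif_iff/PP_Cond/Cond_GS_DS => [h1 h2].
  by split; [apply/G_iff|apply/DS_iff].
- move=> [/G_iff h1 /DS_iff h2]; apply/Pform_purif_iff/Cond_PP.
  exact: GS_DS_Cond.
Qed.

End Part5.


Arguments Cond {R}.
Arguments GS {R}.
Arguments DS {R}.
Arguments nb {R}.

Section Part6.
Variable R : rcfType.
Implicit Types (b g u v w : 'cV[R]_3) (d S : 'M[R]_3).

Lemma rank1 b g d : GS b g d -> DS b d -> nb b = 1 -> d = b *m g^T /\ nb g = 1.
Proof.
move=> hG hD hz1.
have := @GS_DS_Cond R b g d hG hD.
move: hD => [hDD00 [hDD01 [hDD02 [hDD10 [hDD11 [hDD12 [hDD20 [hDD21 [hDD22 hDet]]]]]]]]].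
move=> [hC1 [hC20 [hC21 [hC22 [hC30 [hC31 [hC32 [hC400 [hC401 [hC402 [hC410 [hC411 [hC412 [hC420 [hC421 hC422]]]]]]]]]]]]]]].
have q0 := congr1 (GRing.mul (g j0 0)) hC30.
have r0 := congr1 (GRing.mul (b j0 0)) hC20.
have q1 := congr1 (GRing.mul (g j1 0)) hC31.
have r1 := congr1 (GRing.mul (b j1 0)) hC21.
have q2 := congr1 (GRing.mul (g j2 0)) hC32.
have r2 := congr1 (GRing.mul (b j2 0)) hC22.
have hg2 : g j0 0 ^+ 2 + g j1 0 ^+ 2 + g j2 0 ^+ 2 = nb b.
{ clear - q0 r0 q1 r1 q2 r2. rewrite /nb. lra. }
have t0 := congr1 (GRing.mul (b j0 0 ^+ 2)) hg2.
have u0 := congr1 (GRing.mul (b j0 0)) hC20.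
have v0 := congr1 (GRing.mul (b j0 0 ^+ 2)) hz1.
have hsq0 : (d j0 j0 - b j0 0 * g j0 0) ^+ 2 + (d j0 j1 - b j0 0 * g j1 0) ^+ 2 + (d j0 j2 - b j0 0 * g j2 0) ^+ 2 = 0.
{ clear - t0 u0 v0 hDD00 hz1. lra. }
have [e00 [e01 e02]] := @sq3 _ _ _ _ hsq0.
have t1 := congr1 (GRing.mul (b j1 0 ^+ 2)) hg2.
have u1 := congr1 (GRing.mul (b j1 0)) hC21.
have v1 := congr1 (GRing.mul (b j1 0 ^+ 2)) hz1.
have hsq1 : (d j1 j0 - b j1 0 * g j0 0) ^+ 2 + (d j1 j1 - b j1 0 * g j1 0) ^+ 2 + (d j1 j2 - b j1 0 * g j2 0) ^+ 2 = 0.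
{ clear - t1 u1 v1 hDD11 hz1. lra. }
have [e10 [e11 e12]] := @sq3 _ _ _ _ hsq1.
have t2 := congr1 (GRing.mul (b j2 0 ^+ 2)) hg2.
have u2 := congr1 (GRing.mul (b j2 0)) hC22.
have v2 := congr1 (GRing.mul (b j2 0 ^+ 2)) hz1.
have hsq2 : (d j2 j0 - b j2 0 * g j0 0) ^+ 2 + (d j2 j1 - b j2 0 * g j1 0) ^+ 2 + (d j2 j2 - b j2 0 * g j2 0) ^+ 2 = 0.
{ clear - t2 u2 v2 hDD22 hz1. lra. }
have [e20 [e21 e22]] := @sq3 _ _ _ _ hsq2.
split; last by rewrite /nb hg2.
apply/matrixP => i k; rewrite !mxE sum1 !mxE.
by case: (ord3P i) => ->; case: (ord3P k) => ->; apply/eqP; rewrite -subr_eq0; apply/eqP.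
Qed.


Lemma DS_exists b : nb b <= 1 -> exists d, DS b d.
Proof.
move=> hb.
set s := Num.sqrt (1 - nb b).
have s0 : 0 <= s by exact: sqrtr_ge0.
have hs : s ^+ 2 = 1 - nb b by rewrite sqr_sqrtr // subr_ge0.
set t := (1 + s)^-1.
have ht : t * (1 + s) = 1 by rewrite mulVf //; apply/eqP => h; lra.
have K : 2 * s * t + t ^+ 2 * nb b = 1.
{ have p1 := congr1 (GRing.mul (t ^+ 2)) hs.
  have p2 := congr1 (GRing.mul (t * (1 - s) + 1)) ht.
  clear -p1 p2. lra. }
have K2 : s + t * nb b = 1.
{ have p1 := congr1 (GRing.mul t) hs.
  have p2 := congr1 (GRing.mul (1 - s)) ht.
  clear -p1 p2. lra. }
exists (\matrix_(i, j) - (s * (i == j)%:R + t * (b i 0 * b j 0))).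
rewrite /DS !mxE !ejs /= ?mulr1n ?mulr0n.
have k00 := congr1 (GRing.mul (b j0 0 * b j0 0)) K.
have k01 := congr1 (GRing.mul (b j0 0 * b j1 0)) K.
have k02 := congr1 (GRing.mul (b j0 0 * b j2 0)) K.
have k11 := congr1 (GRing.mul (b j1 0 * b j1 0)) K.
have k12 := congr1 (GRing.mul (b j1 0 * b j2 0)) K.
have k22 := congr1 (GRing.mul (b j2 0 * b j2 0)) K.
have kd := congr1 (GRing.mul (s ^+ 2)) K2.
rewrite /nb in hs K K2 k00 k01 k02 k11 k12 k22 kd *.
by repeat split; lra.
Qed.

Lemma DSmul b d0 S : delta_system b d0 -> is_SO3 S -> delta_system b (d0 *m S).
Proof.
case=> H Hd [HS HdS]; split.
- by rewrite trmx_mul !mulmxA -(mulmxA d0) (mulmx1C HS) mulmx1 H.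
- by rewrite det_mulmx HdS mulr1.
Qed.

Definition Hh w : 'M[R]_3 := 1%:M - (2 / nb w) *: (w *m w^T).
Definition dot u v := u j0 0 * v j0 0 + u j1 0 * v j1 0 + u j2 0 * v j2 0.

Lemma HhE w i k : Hh w i k = (i == k)%:R - 2 / nb w * (w i 0 * w k 0).
Proof. by rewrite !mxE sum1 !mxE. Qed.

Lemma Hh_sym w : (Hh w)^T = Hh w.
Proof. by apply/matrixP => i j; rewrite mxE !HhE eq_sym [w j 0 * _]mulrC. Qed.

Lemma Hh_mulx w x : Hh w *m x = x - (2 / nb w * dot w x) *: w.
Proof.
apply/matrixP => i j; rewrite (ord1P j) !mxE sum3 !HhE ?mxE.
by case: (ord3P i) => ->; rewrite !ejs /= ?mulr1n ?mulr0n /dot; ring.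
Qed.

Lemma Hh_orth w : nb w != 0 -> (Hh w)^T *m Hh w = 1%:M.
Proof.
move=> hw; rewrite Hh_sym.
set c := 2 / nb w.
have hc : c * nb w = 2 by rewrite /c mulfVK.
apply/matrixP => i j; rewrite mxE sum3 !HhE -/c mxE.
have q00 := congr1 (GRing.mul (c * w j0 0 * w j0 0)) hc.
have q01 := congr1 (GRing.mul (c * w j0 0 * w j1 0)) hc.
have q02 := congr1 (GRing.mul (c * w j0 0 * w j2 0)) hc.
have q11 := congr1 (GRing.mul (c * w j1 0 * w j1 0)) hc.
have q12 := congr1 (GRing.mul (c * w j1 0 * w j2 0)) hc.
have q22 := congr1 (GRing.mul (c * w j2 0 * w j2 0)) hc.
rewrite /nb in q00 q01 q02 q11 q12 q22.
by case: (ord3P i) => ->; case: (ord3P j) => ->; rewrite !ejs /= ?mulr1n ?mulr0n; lra.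
Qed.

Lemma Hh_det w : nb w != 0 -> \det (Hh w) = -1.
Proof.
move=> hw; rewrite det3 !HhE !ejs /= ?mulr1n ?mulr0n.
set c := 2 / nb w.
have hc : c * nb w = 2 by rewrite /c mulfVK.
rewrite /nb in hc. lra.
Qed.

Lemma SO3_mul (A B : 'M[R]_3) : is_SO3 A -> is_SO3 B -> is_SO3 (A *m B).
Proof.
case=> hA dA [hB dB]; split; last by rewrite det_mulmx dA dB mulr1.
by rewrite trmx_mul mulmxA -(mulmxA _ A^T) hA mulmx1 hB.
Qed.

Lemma neg_Hh_SO3 w : nb w != 0 -> (Hh w)^T *m Hh w = 1%:M /\ \det (Hh w) = -1.
Proof. by move=> hw; split; [exact: Hh_orth|exact: Hh_det]. Qed.

Lemma HH_SO3 w w' : nb w != 0 -> nb w' != 0 -> is_SO3 (Hh w *m Hh w').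
Proof.
move=> hw hw'; split; last by rewrite det_mulmx !Hh_det // mulrNN mulr1.
rewrite trmx_mul mulmxA -(mulmxA _ (Hh w)^T) Hh_orth // mulmx1 Hh_orth //.
Qed.

Lemma rot3 u v : nb u = 1 -> nb v = 1 -> exists S, is_SO3 S /\ S^T *m u = v.
Proof.
move=> hu hv.
have [huv|huv] := eqVneq (1 + dot u v) 0.
-
  have hsq : (u j0 0 + v j0 0) ^+ 2 + (u j1 0 + v j1 0) ^+ 2 + (u j2 0 + v j2 0) ^+ 2 = 0.
  { rewrite /nb /dot in hu hv huv. lra. }
  have [e0 [e1 e2]] := @sq3 _ _ _ _ hsq.
  have hvu : v = - u.
  { apply/matrixP => i j; rewrite (ord1P j) mxE.
    by case: (ord3P i) => ->; lra. }
  pose w : 'cV[R]_3 := \col_i (if i == j0 then (if (u j1 0 == 0) && (u j2 0 == 0) then u j2 0 else 0)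
           else if i == j1 then (if (u j1 0 == 0) && (u j2 0 == 0) then 0 else u j2 0)
           else (if (u j1 0 == 0) && (u j2 0 == 0) then - u j0 0 else - u j1 0)).
  have hw : nb w != 0 /\ dot w u = 0.
  { rewrite /nb /dot /w !mxE !ejs /=.
    case: ifP => /andP.
    - case=> /eqP z1 /eqP z2; rewrite z1 z2; split; last by ring.
      apply/eqP => h; rewrite /nb z1 z2 in hu. lra.
    - move=> hn; split; last by ring.
      apply/eqP => h; apply: hn.
      have := sqr_ge0 (u j2 0); have := sqr_ge0 (u j1 0) => a1 a2.
      have e1' : u j1 0 ^+ 2 = 0 by lra.
      have e2' : u j2 0 ^+ 2 = 0 by lra.
      by move/eqP: e1'; move/eqP: e2'; rewrite !sqrf_eq0 => -> ->. }
  case: hw => hw hwu.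
  have hu0 : nb u != 0 by rewrite hu oner_eq0.
  exists (Hh w *m Hh u); split; first exact: HH_SO3.
  rewrite trmx_mul !Hh_sym -mulmxA [Hh w *m u]Hh_mulx hwu mulr0 scale0r subr0 Hh_mulx hvu.
  have -> : 2 / nb u * dot u u = 2.
  { have -> : dot u u = nb u by rewrite /dot /nb; ring.
    exact: mulfVK. }
  by apply/matrixP => i j; rewrite !mxE; ring.
- pose w := u + v.
  have hw2 : nb w = 2 * (1 + dot u v).
  { rewrite /nb /w !mxE. rewrite /nb /dot in hu hv *. lra. }
  have hw : nb w != 0.
  { rewrite hw2; apply/eqP => h. have : 1 + dot u v = 0 by lra. by apply/eqP. }
  have hwu : dot w u = 1 + dot u v.
  { rewrite /dot /w !mxE. rewrite /nb /dot in hu *. lra. }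
  have hv0 : nb v != 0 by rewrite hv oner_eq0.
  exists (Hh w *m Hh v); split; first exact: HH_SO3.
  rewrite trmx_mul !Hh_sym -mulmxA [Hh w *m u]Hh_mulx hwu hw2.
  have -> : 2 / (2 * (1 + dot u v)) * (1 + dot u v) = 1.
  { by field. }
  rewrite scale1r (_ : u - w = - v); last first.
  { by apply/matrixP=> i j; rewrite !mxE; ring. }
  rewrite mulmxN Hh_mulx.
  have -> : 2 / nb v * dot v v = 2.
  { have -> : dot v v = nb v by rewrite /dot /nb; ring.
    exact: mulfVK. }
  by apply/matrixP => i j; rewrite !mxE; ring.
Qed.

End Part6.


Arguments Cond {R}.
Arguments GS {R}.
Arguments DS {R}.
Arguments nb {R}.

Arguments rank1 {R b g d}.
Arguments gP {R}.
Arguments dP {R}.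
Arguments rot3 {R u v}.
Arguments DS_exists {R b}.
Arguments purif_form {R b P}.
Arguments Pform_inj {R b g g' d d'}.
Arguments DSmul {R b d0 S}.
Arguments main_i {R b g d}.
Arguments vnorm1 {R v}.
Arguments G_iff {R b g d}.
Arguments DS_iff {R b d}.

Section Part7.
Variable R : rcfType.
Implicit Types (b g u v w : 'cV[R]_3) (d S : 'M[R]_3).

Lemma SO3_find b d0 d : nb b <= 1 -> delta_system b d0 -> delta_system b d ->
  exists S, is_SO3 S /\ d = d0 *m S.
Proof.
move=> hb H0 H.
have [hlt|hgt|heq] := ltrgtP (nb b) 1.
- case: (H0) => Hdd0 Hd0; case: (H) => Hdd Hd.
  rewrite vnorm2 in Hd0 Hd Hdd0 Hdd.
  have hne : nb b - 1 != 0 by apply/eqP => h; lra.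
  have Hu : d0 \in unitmx by rewrite unitmxE unitfE Hd0.
  exists (invmx d0 *m d); split; last by rewrite mulKVmx.
  split.
  + apply: mulmx1C.
    have Edd : d *m d^T = d0 *m d0^T by rewrite Hdd Hdd0.
    rewrite trmx_mul !mulmxA -[invmx d0 *m d *m d^T]mulmxA Edd !mulmxA mulVmx // mul1mx.
    by rewrite -trmx_mul mulVmx // trmx1.
  + by rewrite det_mulmx det_inv Hd Hd0 mulVf.
- lra.
- move/DS_iff: (H0) => D0; move/DS_iff: (H) => D.
  set u := d0^T *m b; set v := d^T *m b.
  have G0 : GS b u d0 by apply/G_iff.
  have G : GS b v d by apply/G_iff.
  have [e0 n0] := rank1 G0 D0 heq.
  have [e n] := rank1 G D heq.
  have [S [hS hSu]] := rot3 n0 n.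
  exists S; split => //.
  rewrite e0 -mulmxA -[u^T *m S]trmxK trmx_mul trmxK hSu.
  exact: e.
Qed.

Lemma btb b : b^T *m b = (nb b)%:M.
Proof.
apply/matrixP => i j; rewrite (ord1P i) (ord1P j) !mxE sum3 !mxE /nb /=.
by rewrite mulr1n; ring.
Qed.

End Part7.
Arguments SO3_find {R b d0 d}.

Theorem theorem2p1 (R : rcfType) (b : 'cV[R]_3) (hb : vnorm b <= 1) :
  (* (i) *)
  (forall (g : 'cV[R]_3) (d : 'M[R]_3),
     purification (rho_of b) (Pform b g d) <-> (g = d^T *m b /\ delta_system b d))
  /\ (forall P : 'M[R[i]]_(2 * 2), purification (rho_of b) P ->
        exists (g : 'cV[R]_3) (d : 'M[R]_3), P = Pform b g d)
  (* (ii) *)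
  /\ (exists d : 'M[R]_3, delta_system b d)
  /\ (forall d0 : 'M[R]_3, delta_system b d0 ->
        forall d : 'M[R]_3, delta_system b d <-> exists S, is_SO3 S /\ d = d0 *m S)
  (* (iii) *)
  /\ (vnorm b < 1 -> forall d0 : 'M[R]_3, delta_system b d0 ->
        set_bij (@is_SO3 R) (purification (rho_of b))
          (fun S => Pform b ((d0 *m S)^T *m b) (d0 *m S)))
  /\ (vnorm b = 1 ->
        exists f : 'cV[R]_3 -> 'M[R[i]]_(2 * 2),
          set_bij (fun v => vnorm v = 1) (purification (rho_of b)) f).
Proof.
have h0 : 0 <= vnorm b by exact: sqrtr_ge0.
have hnb : nb b <= 1 by rewrite -vnorm2; nra.
split; first by move=> g d; exact: main_i.
split.
{ move=> P hP; exists (gP P), (dP P); exact: purif_form. }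
split.
{ have [d hd] := DS_exists hnb; exists d; exact/DS_iff. }
split.
{ move=> d0 hd0 d; split.
  - by move=> hd; exact: (SO3_find hnb hd0 hd).
  - by case=> S [hS ->]; exact: DSmul. }
split.
{ move=> hlt d0 hd0.
  have hlt' : nb b < 1 by rewrite -vnorm2; nra.
  have Hu : d0 \in unitmx.
  { case: hd0 => _ Hd0; rewrite vnorm2 in Hd0.
    rewrite unitmxE unitfE Hd0; apply/eqP => h; lra. }
  split; [|split].
  - move=> S hS; apply/main_i; split => //; exact: DSmul.
  - move=> S S' hS hS' /Pform_inj [_ e].
    by rewrite -(mulKmx Hu S) e mulKmx.
  - move=> P hP.
    have Pe := purif_form hP.
    move: (hP); rewrite {1}Pe => /main_i [hg hd].
    have [S [hS eS]] := SO3_find hnb hd0 hd.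
    exists S; split => //.
    by rewrite [RHS]Pe hg eS. }
move=> heq.
have heq' : nb b = 1 by rewrite -vnorm2 heq expr1n.
exists (fun v => Pform b v (b *m v^T)).
split; [|split].
- move=> v /vnorm1 hv; apply/main_i; split.
  + by rewrite trmx_mul trmxK -mulmxA btb heq' mulmx1.
  + apply/DS_iff; rewrite /DS !mxE !sum1 !mxE.
    have q00 := congr1 (GRing.mul (b j0 0 * b j0 0)) hv.
    have q01 := congr1 (GRing.mul (b j0 0 * b j1 0)) hv.
    have q02 := congr1 (GRing.mul (b j0 0 * b j2 0)) hv.
    have q11 := congr1 (GRing.mul (b j1 0 * b j1 0)) hv.
    have q12 := congr1 (GRing.mul (b j1 0 * b j2 0)) hv.
    have q22 := congr1 (GRing.mul (b j2 0 * b j2 0)) hv.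
    rewrite /nb in hv heq' q00 q01 q02 q11 q12 q22 *.
    by repeat split; lra.
- by move=> x y hx hy /Pform_inj [e _].
- move=> P hP.
  have Pe := purif_form hP.
  move: (hP); rewrite {1}Pe => /main_i [/G_iff G /DS_iff D].
  have [e n] := rank1 G D heq'.
  exists (gP P); split; first exact/vnorm1.
  by rewrite -e -Pe.
Qed.
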